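(* Let $M$ be a compact connected $1$-manifold and let $G$ be a group acting by homeomorphisms of $M$, generated by a finite symmetric set $\mathcal{G}$, and assume $G$ has subexponential growth, i.e. $\lim_{n\to\infty}\frac{1}{n}\log|B(n)| = 0$ where $B(n)$ is the set of elements of word length at most $n$ with respect to $\mathcal{G}$. Then for every $\varepsilon>0$ there is a homeomorphism $h$ of $M$ such that $hgh^{-1}$ is Lipschitz with Lipschitz constant at most $e^{\varepsilon}$ for every $g\in\mathcal{G}$. In particular, for every homeomorphism $f$ of the circle and every $\varepsilon>0$, $f$ is topologically conjugate to a Lipschitz homeomorphism with Lipschitz constant at most $e^{\varepsilon}$, and consequently the topological entropy of every circle homeomorphism is zero.
   Context: Word length $\|f\|$ of $f\in G$ with respect to $\mathcal{G}$: the minimal number of factors from $\mathcal{G}$ needed to write $f$. *)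

(* Defs.v *)
From Stdlib Require Import Reals List.
Import ListNotations.
Open Scope R_scope.

(** Compact connected 1-manifolds: up to homeomorphism, [0,1] or the circle. *)
Inductive cc1 : Type := Interval01 | Circle.

Definition pt (m : cc1) : Type :=
  match m with
  | Interval01 => {x : R | 0 <= x <= 1}
  | Circle => {x : R | 0 <= x < 1}   (* R/Z, fundamental domain [0,1) *)
  end.

Definition dist (m : cc1) : pt m -> pt m -> R :=
  match m return pt m -> pt m -> R with
  | Interval01 => fun x y => Rabs (proj1_sig x - proj1_sig y)
  | Circle => fun x y =>
      let d := Rabs (proj1_sig x - proj1_sig y) in Rmin d (1 - d)
  end.

Definition mcontinuous (m : cc1) (f : pt m -> pt m) : Prop :=
  forall x (eps : R), 0 < eps -> exists delta, 0 < delta /\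
    forall y, dist m x y < delta -> dist m (f x) (f y) < eps.

Definition homeo_pair (m : cc1) (h hi : pt m -> pt m) : Prop :=
  (forall x, hi (h x) = x) /\ (forall x, h (hi x) = x) /\
  mcontinuous m h /\ mcontinuous m hi.

Definition is_homeo (m : cc1) (h : pt m -> pt m) : Prop :=
  exists hi, homeo_pair m h hi.

Definition lipschitz (m : cc1) (L : R) (f : pt m -> pt m) : Prop :=
  forall x y, dist m (f x) (f y) <= L * dist m x y.

Record Group : Type := {
  gcar :> Type;
  gmul : gcar -> gcar -> gcar;
  ginv : gcar -> gcar;
  gone : gcar;
  gmulA : forall a b c, gmul a (gmul b c) = gmul (gmul a b) c;
  gmul1l : forall a, gmul gone a = a;
  gmul1r : forall a, gmul a gone = a;
  gmulVl : forall a, gmul (ginv a) a = gone;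
  gmulVr : forall a, gmul a (ginv a) = gone
}.

Definition is_homeo_action (G : Group) (m : cc1) (act : G -> pt m -> pt m) : Prop :=
  (forall x, act (gone G) x = x) /\
  (forall a b x, act (gmul G a b) x = act a (act b x)) /\
  (forall a, is_homeo m (act a)).

Definition word_eval (G : Group) (w : list G) : G := fold_right (gmul G) (gone G) w.

Definition is_word (G : Group) (gens : list G) (w : list G) : Prop :=
  forall s, In s w -> In s gens.

Definition symmetric_set (G : Group) (gens : list G) : Prop :=
  forall s, In s gens -> In (ginv G s) gens.

Definition generates (G : Group) (gens : list G) : Prop :=
  forall g, exists w, is_word G gens w /\ word_eval G w = g.

Definition in_ball (G : Group) (gens : list G) (n : nat) (g : G) : Prop :=
  exists w, is_word G gens w /\ (length w <= n)%nat /\ word_eval G w = g.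

Definition ball_card (G : Group) (gens : list G) (n k : nat) : Prop :=
  exists l : list G, NoDup l /\ (forall g, In g l <-> in_ball G gens n g) /\ length l = k.

Definition subexp_growth (G : Group) (gens : list G) : Prop :=
  exists c : nat -> nat, (forall n, ball_card G gens n (c n)) /\
    Un_cv (fun n => ln (INR (c n)) / INR n) 0.

(** Bowen (n,delta)-separated sets, and topological entropy zero:
    h(f) = sup_{delta>0} limsup_n (1/n) log s(n,delta) = 0, where s(n,delta) is the
    maximal cardinality of an (n,delta)-separated set. *)
Definition separated (m : cc1) (f : pt m -> pt m) (n : nat) (delta : R) (l : list (pt m)) : Prop :=
  NoDup l /\ forall x y, In x l -> In y l -> x <> y ->
    exists k, (k < n)%nat /\ delta < dist m (Nat.iter k f x) (Nat.iter k f y).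

Definition top_entropy_zero (m : cc1) (f : pt m -> pt m) : Prop :=
  forall delta, 0 < delta -> forall eta, 0 < eta -> exists N : nat,
    forall n, (N <= n)%nat -> forall l, separated m f n delta l ->
      INR (length l) <= exp (eta * INR n).

(* Main.v *)
Require Import Defs.
From Stdlib Require Import Reals List Lra Lia ZArith ClassicalEpsilon ProofIrrelevance FunctionalExtensionality.
From Coquelicot Require Import Coquelicot.
Import ListNotations.
Open Scope R_scope.

Lemma ex_series_le_R (a b : nat -> R) :
  (forall n, 0 <= a n <= b n) -> ex_series b -> ex_series a.
Proof.
  intros H Hb. apply (ex_series_le a b); auto.
  intros n. change (norm (a n)) with (Rabs (a n)).
  rewrite Rabs_pos_eq; apply H.
Qed.

Lemma Series_ge0 (a : nat -> R) : (forall n, 0 <= a n) -> ex_series a -> 0 <= Series a.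
Proof.
  intros H Ha. replace 0 with (0 * Series a) by ring.
  rewrite <- Series_scal_l.
  apply Series_le; auto. intros n; split; [lra| rewrite Rmult_0_l; apply H].
Qed.

Lemma Series_tail (a : nat -> R) : ex_series a -> forall eta, 0 < eta ->
  exists N, Rabs (Series (fun k => a (S N + k)%nat)) < eta.
Proof.
  intros Ha eta Heta.
  pose proof (Series_correct a Ha) as Hs.
  unfold is_series in Hs.
  assert (Hl : is_lim_seq (sum_n a) (Series a)) by exact Hs.
  apply is_lim_seq_spec in Hl.
  destruct (Hl (mkposreal eta Heta)) as [N HN].
  exists N. rewrite (Series_incr_n a (S N)) in HN; try lia; auto.
  specialize (HN N (le_n _)). simpl in HN.
  rewrite sum_n_Reals in HN. simpl pred.
  set (T := Series (fun k : nat => a (S (N + k)))) in *.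
  replace (sum_f_R0 a N - (sum_f_R0 a N + T)) with (- T) in HN by ring.
  rewrite Rabs_Ropp in HN. exact HN.
Qed.

Definition lsum {A} (F : A -> R) (l : list A) : R :=
  fold_right (fun a s => F a + s) 0 l.

Lemma lsum_nonneg {A} (F : A -> R) l : (forall x, In x l -> 0 <= F x) -> 0 <= lsum F l.
Proof. induction l as [|a l IH]; simpl; intros H; [lra|].
  pose proof (H a (or_introl eq_refl)). pose proof (IH (fun x Hx => H x (or_intror Hx))). lra. Qed.

Lemma lsum_le {A} (F G : A -> R) l : (forall x, In x l -> F x <= G x) -> lsum F l <= lsum G l.
Proof. induction l as [|a l IH]; simpl; intros H; [lra|].
  pose proof (H a (or_introl eq_refl)). pose proof (IH (fun x Hx => H x (or_intror Hx))). lra. Qed.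

Lemma lsum_ext {A} (F G : A -> R) l : (forall x, F x = G x) -> lsum F l = lsum G l.
Proof. intros H; induction l; simpl; auto. rewrite H, IHl; auto. Qed.

Lemma lsum_plus {A} (F G : A -> R) l : lsum (fun x => F x + G x) l = lsum F l + lsum G l.
Proof. induction l; simpl; [lra|]. rewrite IHl; ring. Qed.

Lemma lsum_const1 {A} l : lsum (fun _ : A => 1) l = INR (length l).
Proof. induction l; simpl; auto. rewrite IHl. destruct (length l); simpl; ring. Qed.

Lemma lsum_bound {A} (F : A -> R) K l : (forall x, F x <= K) -> lsum F l <= K * INR (length l).
Proof. intros H; induction l; unfold lsum in *; cbn [fold_right length] in *.
  - rewrite Rmult_0_r; lra.
  - pose proof (H a). rewrite S_INR. nra. Qed.

Lemma lsum_map {A B} (F : B -> R) (r : A -> B) l : lsum F (map r l) = lsum (fun x => F (r x)) l.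
Proof. induction l; simpl; auto. rewrite IHl; auto. Qed.

Lemma lsum_app {A} (F : A -> R) l1 l2 : lsum F (l1 ++ l2) = lsum F l1 + lsum F l2.
Proof. induction l1; simpl; [lra|]. rewrite IHl1; ring. Qed.

Lemma lsum_In {A} (F : A -> R) l x : In x l -> (forall y, 0 <= F y) -> F x <= lsum F l.
Proof. induction l as [|a l IH]; simpl; [tauto|]. intros [<-|Hx] H.
  - pose proof (lsum_nonneg F l (fun y _ => H y)). lra.
  - pose proof (IH Hx H). pose proof (H a). lra. Qed.

Lemma lsum_incl {A} (F : A -> R) (l1 l2 : list A) :
  NoDup l1 -> incl l1 l2 -> (forall x, 0 <= F x) -> lsum F l1 <= lsum F l2.
Proof.
  revert l2; induction l1 as [|a l1 IH]; intros l2 Hnd Hinc HF; simpl.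
  - apply lsum_nonneg; auto.
  - inversion Hnd as [|? ? Hna Hnd']; subst.
    destruct (in_split a l2 (Hinc a (or_introl eq_refl))) as [la [lb ->]].
    rewrite lsum_app; simpl.
    assert (lsum F l1 <= lsum F (la ++ lb)).
    { apply IH; auto. intros x Hx. assert (Hx2 := Hinc x (or_intror Hx)).
      apply in_app_or in Hx2. apply in_or_app. destruct Hx2 as [?|[?|?]]; auto.
      subst; contradiction. }
    rewrite lsum_app in H. lra.
Qed.

Lemma NoDup_map_inj {A B} (r : A -> B) l : (forall x y, r x = r y -> x = y) -> NoDup l -> NoDup (map r l).
Proof. intros Hr Hl. apply NoDup_map_NoDup_ForallPairs; auto. intros x y _ _; apply Hr. Qed.

(** * Weighted sums over balls *)
Section Mu.
Variable I : Type.
Variable B : nat -> list I.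
Variable eps : R.
Hypothesis eps_ge0 : 0 <= eps.
Hypothesis Bnd : forall n, NoDup (B n).
Hypothesis Bsum : ex_series (fun n => exp (- (eps * INR n)) * INR (length (B n))).

Definition W (n : nat) := exp (- (eps * INR n)).

Lemma W_pos n : 0 < W n.
Proof. unfold W; apply exp_pos. Qed.

Lemma W_le1 n : W n <= 1.
Proof. unfold W. rewrite <- exp_0. destruct (Req_dec (eps * INR n) 0) as [E|E].
  - rewrite E, Ropp_0; lra.
  - left; apply exp_increasing. pose proof (pos_INR n). nra. Qed.

Lemma W_S n : W (S n) = exp (- eps) * W n.
Proof. unfold W. rewrite <- exp_plus. f_equal. rewrite S_INR; ring. Qed.

Lemma W_0 : W 0 = 1.
Proof. unfold W. simpl. rewrite Rmult_0_r, Ropp_0, exp_0; auto. Qed.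

Definition Mu (F : I -> R) : R := Series (fun n => W n * lsum F (B n)).

Lemma ex_Mu (F : I -> R) K : 0 <= K -> (forall i, 0 <= F i <= K) ->
  ex_series (fun n => W n * lsum F (B n)).
Proof.
  intros HK H.
  apply ex_series_le_R with (b := fun n => K * (exp (- (eps * INR n)) * INR (length (B n)))).
  - intros n. pose proof (W_pos n). split.
    + apply Rmult_le_pos; [lra|]. apply lsum_nonneg; intros; apply H.
    + pose proof (lsum_bound F K (B n) (fun x => proj2 (H x))).
      unfold W in *. nra.
  - apply (ex_series_scal_l K) in Bsum. exact Bsum.
Qed.

Lemma Mu_ge0 F K : 0 <= K -> (forall i, 0 <= F i <= K) -> 0 <= Mu F.
Proof. intros HK H. apply Series_ge0; [|eapply ex_Mu; eauto].
  intros n; apply Rmult_le_pos; [left; apply W_pos|]. apply lsum_nonneg; intros; apply H. Qed.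

Lemma Mu_le F G K : 0 <= K -> (forall i, 0 <= F i <= G i) -> (forall i, G i <= K) -> Mu F <= Mu G.
Proof. intros HK H HG. apply Series_le.
  - intros n; pose proof (W_pos n). split.
    + apply Rmult_le_pos; [lra|]. apply lsum_nonneg; intros; apply H.
    + apply Rmult_le_compat_l; [lra|]. apply lsum_le; intros; apply H.
  - apply (ex_Mu G K); auto. intros i; split; [|auto]. destruct (H i); lra.
Qed.

Lemma Mu_ext F G : (forall i, F i = G i) -> Mu F = Mu G.
Proof. intros H; apply Series_ext; intros n; rewrite (lsum_ext F G); auto. Qed.

Lemma Mu_plus F G K : 0 <= K -> (forall i, 0 <= F i <= K) -> (forall i, 0 <= G i <= K) ->
  Mu (fun i => F i + G i) = Mu F + Mu G.
Proof. intros HK HF HG. unfold Mu. rewrite <- Series_plus.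
  - apply Series_ext; intros n. rewrite lsum_plus; ring.
  - eapply ex_Mu; eauto.
  - eapply ex_Mu; eauto.
Qed.

Lemma Mu_In0 F K i0 : 0 <= K -> (forall i, 0 <= F i <= K) -> In i0 (B 0) -> F i0 <= Mu F.
Proof.
  intros HK HF Hi. unfold Mu. rewrite Series_incr_1 by (eapply ex_Mu; eauto).
  rewrite W_0, Rmult_1_l.
  pose proof (lsum_In F (B 0) i0 Hi (fun y => proj1 (HF y))).
  assert (0 <= Series (fun k => W (S k) * lsum F (B (S k)))).
  { apply Series_ge0.
    - intros n; apply Rmult_le_pos; [left; apply W_pos|]. apply lsum_nonneg; intros; apply HF.
    - apply (proj1 (ex_series_incr_n (fun n => W n * lsum F (B n)) 1)). eapply ex_Mu; eauto. }
  lra.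
Qed.

Lemma Mu_shift F K (r : I -> I) : 0 <= K -> (forall i, 0 <= F i <= K) ->
  (forall n i, In i (B n) -> In (r i) (B (S n))) -> (forall i j, r i = r j -> i = j) ->
  Mu (fun i => F (r i)) <= exp eps * Mu F.
Proof.
  intros HK HF Hr Hinj.
  assert (Hex : ex_series (fun n => W n * lsum F (B n))) by (eapply ex_Mu; eauto).
  unfold Mu at 2. rewrite Series_incr_1 by auto.
  assert (Hle : Mu (fun i => F (r i)) <= Series (fun n => exp eps * (W (S n) * lsum F (B (S n))))).
  { apply Series_le.
    - intros n. pose proof (W_pos n). split.
      + apply Rmult_le_pos; [lra|]. apply lsum_nonneg; intros; apply HF.
      + rewrite W_S. replace (exp eps * (exp (- eps) * W n * lsum F (B (S n))))
          with (exp (eps + - eps) * W n * lsum F (B (S n))) by (rewrite exp_plus; ring).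
        replace (eps + - eps) with 0 by ring. rewrite exp_0, Rmult_1_l.
        apply Rmult_le_compat_l; [lra|].
        rewrite <- lsum_map. apply lsum_incl.
        * apply NoDup_map_inj; auto.
        * intros x Hx. apply in_map_iff in Hx. destruct Hx as [y [<- Hy]]. auto.
        * intros; apply HF.
    - apply (ex_series_scal_l (exp eps) (fun n => W (S n) * lsum F (B (S n)))). apply (proj1 (ex_series_incr_n (fun n => W n * lsum F (B n)) 1)). exact Hex. }
  rewrite Series_scal_l in Hle.
  pose proof (exp_pos eps).
  assert (0 <= W 0 * lsum F (B 0)).
  { apply Rmult_le_pos; [left; apply W_pos|]. apply lsum_nonneg; intros; apply HF. }
  nra.
Qed.

(** smallness: finite part + tail *)
Lemma lsum_small {Y} (Fy : Y -> I -> R) (d : Y -> R) (L : list I) :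
  (forall i eta, 0 < eta -> exists delta, 0 < delta /\ forall y, d y < delta -> Fy y i < eta) ->
  forall eta, 0 < eta -> exists delta, 0 < delta /\ forall y, d y < delta -> lsum (Fy y) L < eta.
Proof.
  intros H. induction L as [|a L IH]; intros eta Heta.
  - exists 1; split; [lra|]; intros; simpl; lra.
  - destruct (H a (eta/2)) as [d1 [Hd1 H1]]; [lra|].
    destruct (IH (eta/2)) as [d2 [Hd2 H2]]; [lra|].
    exists (Rmin d1 d2); split; [apply Rmin_glb_lt; auto|].
    intros y Hy. simpl. pose proof (H1 y (Rlt_le_trans _ _ _ Hy (Rmin_l _ _))).
    pose proof (H2 y (Rlt_le_trans _ _ _ Hy (Rmin_r _ _))). lra.
Qed.

Lemma partial_small {Y} (Fy : Y -> I -> R) (d : Y -> R) :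
  (forall y i, 0 <= Fy y i) ->
  (forall i eta, 0 < eta -> exists delta, 0 < delta /\ forall y, d y < delta -> Fy y i < eta) ->
  forall N eta, 0 < eta -> exists delta, 0 < delta /\ forall y, d y < delta ->
    sum_f_R0 (fun n => W n * lsum (Fy y) (B n)) N < eta.
Proof.
  intros H0 H. induction N as [|N IH]; intros eta Heta.
  - destruct (lsum_small Fy d (B 0) H eta Heta) as [dl [Hdl Hl]].
    exists dl; split; auto; intros y Hy; simpl.
    pose proof (Hl y Hy). rewrite W_0. lra.
  - destruct (lsum_small Fy d (B (S N)) H (eta/2)) as [d1 [Hd1 H1]]; [lra|].
    destruct (IH (eta/2)) as [d2 [Hd2 H2]]; [lra|].
    exists (Rmin d1 d2); split; [apply Rmin_glb_lt; auto|].
    intros y Hy. simpl. pose proof (H1 y (Rlt_le_trans _ _ _ Hy (Rmin_l _ _))).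
    pose proof (H2 y (Rlt_le_trans _ _ _ Hy (Rmin_r _ _))).
    pose proof (W_le1 (S N)). pose proof (W_pos (S N)).
    assert (0 <= lsum (Fy y) (B (S N))) by (apply lsum_nonneg; auto). nra.
Qed.

Lemma Mu_small {Y} (Fy : Y -> I -> R) (d : Y -> R) :
  (forall y i, 0 <= Fy y i <= 1) ->
  (forall i eta, 0 < eta -> exists delta, 0 < delta /\ forall y, d y < delta -> Fy y i < eta) ->
  forall eta, 0 < eta -> exists delta, 0 < delta /\ forall y, d y < delta -> Mu (Fy y) < eta.
Proof.
  intros H0 H eta Heta.
  destruct (Series_tail _ (ex_Mu (fun _ => 1) 1 ltac:(lra) ltac:(intros; lra)) (eta/2)) as [N HN]; [lra|].
  destruct (partial_small Fy d (fun y i => proj1 (H0 y i)) H N (eta/2)) as [dl [Hdl Hl]]; [lra|].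
  exists dl; split; auto. intros y Hy. unfold Mu.
  rewrite (Series_incr_n _ (S N)) by (lia || (eapply ex_Mu with (K := 1); eauto; lra)).
  simpl pred. pose proof (Hl y Hy).
  assert (Series (fun k => W (S N + k) * lsum (Fy y) (B (S N + k))) <=
          Series (fun k => W (S N + k) * lsum (fun _ => 1) (B (S N + k)))).
  { apply Series_le.
    - intros n; pose proof (W_pos (S N + n)). split.
      + apply Rmult_le_pos; [lra|]. apply lsum_nonneg; intros; apply H0.
      + apply Rmult_le_compat_l; [lra|]. apply lsum_le; intros; apply H0.
    - apply (proj1 (ex_series_incr_n (fun n => W n * lsum (fun _ => 1) (B n)) (S N))).
      eapply ex_Mu with (K := 1); eauto; intros; lra. }
  pose proof (Rle_abs (Series (fun k : nat => W (S N + k) * lsum (fun _ : I => 1) (B (S N + k))))).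
  lra.
Qed.

End Mu.

Lemma cont_pt_intro (f : R -> R) x :
  (forall eps, 0 < eps -> exists delta, 0 < delta /\ forall y, Rabs (y - x) < delta -> Rabs (f y - f x) < eps) ->
  continuity_pt f x.
Proof.
  intros H eps Heps. destruct (H eps Heps) as [d [Hd Hy]].
  exists d; split; auto. intros y [_ Hy']. simpl in *. unfold R_dist in *. apply Hy; auto.
Qed.

Lemma cont_pt_elim (f : R -> R) x : continuity_pt f x ->
  forall eps, 0 < eps -> exists delta, 0 < delta /\ forall y, Rabs (y - x) < delta -> Rabs (f y - f x) < eps.
Proof.
  intros H eps Heps. destruct (H eps Heps) as [d [Hd Hy]].
  exists d; split; auto. intros y Hyx. destruct (Req_dec y x) as [->|Hne].
  - rewrite Rminus_diag, Rabs_R0; auto.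
  - apply (Hy y). split; [split; [exact I| auto]|exact Hyx].
Qed.

Definition clamp (p q t : R) := Rmax p (Rmin q t).

Lemma clamp_in p q t : p <= q -> p <= clamp p q t <= q.
Proof. intros; unfold clamp, Rmax, Rmin; repeat destruct Rle_dec; lra. Qed.

Lemma clamp_id p q t : p <= t <= q -> clamp p q t = t.
Proof. intros; unfold clamp, Rmax, Rmin; repeat destruct Rle_dec; lra. Qed.

Lemma clamp_lip p q s t : Rabs (clamp p q s - clamp p q t) <= Rabs (s - t).
Proof. unfold clamp, Rmax, Rmin, Rabs; repeat destruct Rle_dec; repeat destruct Rcase_abs; lra. Qed.

Lemma clamp_cont p q t : continuity_pt (clamp p q) t.
Proof. apply cont_pt_intro. intros e He; exists e; split; auto; intros y Hy.
  pose proof (clamp_lip p q y t); lra. Qed.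

Lemma IVT_loc (f : R -> R) p q : p <= q -> (forall t, p <= t <= q -> continuity_pt f t) ->
  f p * f q <= 0 -> exists z, p <= z <= q /\ f z = 0.
Proof.
  intros Hpq Hc Hs.
  set (g := fun t => f (clamp p q t)).
  assert (Hg : continuity g).
  { intros t. unfold g. apply (continuity_pt_comp (clamp p q) f). apply clamp_cont.
    apply Hc, clamp_in; auto. }
  destruct (IVT_cor g p q Hg Hpq) as [z [Hz Hgz]].
  { unfold g. rewrite !clamp_id by lra. auto. }
  exists z; split; auto. unfold g in Hgz. rewrite clamp_id in Hgz; auto.
Qed.

Lemma Mono (f : R -> R) a b : a < b ->
  (forall t, a <= t <= b -> continuity_pt f t) ->
  (forall x y, a <= x <= b -> a <= y <= b -> f x = f y -> x = y) ->
  f a < f b -> forall x y, a <= x <= b -> a <= y <= b -> x < y -> f x < f y.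
Proof.
  intros Hab Hc Hi Hfab x y Hx Hy Hxy.
  destruct (Rlt_le_dec (f x) (f y)) as [?|Hle]; auto. exfalso.
  set (s := fun t => f (b + t * (y - b)) - f (a + t * (x - a))).
  assert (Hs : forall t, 0 <= t <= 1 -> continuity_pt s t).
  { intros t Ht. unfold s. apply continuity_pt_minus.
    - apply (continuity_pt_comp (fun t => b + t * (y - b)) f).
      + apply continuity_pt_plus; [apply continuity_pt_const; intros ? ?; auto|].
        apply continuity_pt_mult; [apply derivable_continuous_pt, derivable_pt_id| apply continuity_pt_const; intros ? ?; auto].
      + apply Hc. nra.
    - apply (continuity_pt_comp (fun t => a + t * (x - a)) f).
      + apply continuity_pt_plus; [apply continuity_pt_const; intros ? ?; auto|].
        apply continuity_pt_mult; [apply derivable_continuous_pt, derivable_pt_id| apply continuity_pt_const; intros ? ?; auto].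
      + apply Hc. nra. }
  destruct (IVT_loc s 0 1 ltac:(lra) Hs) as [t [Ht Hst]].
  { unfold s. replace (b + 0 * (y - b)) with b by ring. replace (a + 0 * (x - a)) with a by ring.
    replace (b + 1 * (y - b)) with y by ring. replace (a + 1 * (x - a)) with x by ring.
    assert (f b - f a > 0) by lra. assert (f y - f x <= 0) by lra. nra. }
  unfold s in Hst.
  assert (E : b + t * (y - b) = a + t * (x - a)) by (apply Hi; [nra|nra|lra]).
  nra.
Qed.

Lemma Mono2 (f : R -> R) a b : a < b ->
  (forall t, a <= t <= b -> continuity_pt f t) ->
  (forall x y, a <= x <= b -> a <= y <= b -> f x = f y -> x = y) ->
  (forall x y, a <= x <= b -> a <= y <= b -> x < y -> f x < f y) \/
  (forall x y, a <= x <= b -> a <= y <= b -> x < y -> f y < f x).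
Proof.
  intros Hab Hc Hi. destruct (Rtotal_order (f a) (f b)) as [H|[H|H]].
  - left; apply Mono; auto.
  - apply Hi in H; lra.
  - right. intros x y Hx Hy Hxy.
    pose proof (Mono (fun t => - f t) a b Hab) as M.
    assert (- f x < - f y); [|lra].
    apply M; auto; try lra.
    + intros t Ht. apply continuity_pt_opp; auto.
    + intros u v Hu Hv E. apply Hi; auto; lra.
Qed.

Definition ccw (x y : R) : R := if Rle_dec x y then y - x else y - x + 1.

Ltac ccw_brute :=
  unfold ccw in *;
  repeat match goal with
  | |- context [Rle_dec ?a ?b] => destruct (Rle_dec a b); try (exfalso; lra)
  | H : context [Rle_dec ?a ?b] |- _ => destruct (Rle_dec a b); try (exfalso; lra)
  end; try lra.

Lemma ccw_range x y : 0 <= x < 1 -> 0 <= y < 1 -> 0 <= ccw x y < 1.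
Proof. intros; ccw_brute. Qed.

Lemma ccw_xx x : ccw x x = 0.
Proof. ccw_brute. Qed.

Lemma ccw_eq0 x y : 0 <= x < 1 -> 0 <= y < 1 -> ccw x y = 0 -> x = y.
Proof. intros; ccw_brute. Qed.

Lemma ccw_anti x y : 0 <= x < 1 -> 0 <= y < 1 -> x <> y -> ccw x y + ccw y x = 1.
Proof. intros. destruct (Rtotal_order x y) as [?|[?|?]]; [|contradiction|]; ccw_brute. Qed.

Lemma ccw_rot c p q : 0 <= c < 1 -> 0 <= p < 1 -> 0 <= q < 1 -> ccw (ccw c p) (ccw c q) = ccw p q.
Proof. intros; ccw_brute. Qed.

Lemma trans_incr x y z X Y Z :
  0 <= x < 1 -> 0 <= y < 1 -> 0 <= z < 1 -> 0 <= X < 1 -> 0 <= Y < 1 -> 0 <= Z < 1 ->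
  (x < y -> X < Y) -> (y < x -> Y < X) -> (x = y -> X = Y) ->
  (y < z -> Y < Z) -> (z < y -> Z < Y) -> (y = z -> Y = Z) ->
  (x < z -> X < Z) -> (z < x -> Z < X) -> (x = z -> X = Z) ->
  ccw x y + ccw y z = ccw x z -> ccw X Y + ccw Y Z = ccw X Z.
Proof.
  intros.
  destruct (Rtotal_order x y) as [Q1|[Q1|Q1]];
  [pose proof (ltac:(auto) : X < Y)|pose proof (ltac:(auto) : X = Y)|pose proof (ltac:(auto) : Y < X)];
  (destruct (Rtotal_order y z) as [Q2|[Q2|Q2]];
  [pose proof (ltac:(auto) : Y < Z)|pose proof (ltac:(auto) : Y = Z)|pose proof (ltac:(auto) : Z < Y)]);
  (destruct (Rtotal_order x z) as [Q3|[Q3|Q3]];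
  [pose proof (ltac:(auto) : X < Z)|pose proof (ltac:(auto) : X = Z)|pose proof (ltac:(auto) : Z < X)]);
  try (exfalso; lra); ccw_brute.
Qed.

Ltac use_imps :=
  repeat match goal with
  | H : ?A -> ?B |- _ =>
      (let h := fresh in assert (h : A) by lra; specialize (H h)) || clear H
  end.

Lemma refl_ord x y X Y : 0 <= x < 1 -> 0 <= y < 1 -> 0 <= X < 1 -> 0 <= Y < 1 ->
  (x = 0 -> X = 0) -> (0 < y -> 0 < Y) -> (0 < x -> x < y -> Y < X) ->
  x < y -> ccw X 0 < ccw Y 0.
Proof.
  intros Hx Hy HX HY H1 H2 H3 Hxy.
  destruct (Req_dec x 0) as [E|E].
  - rewrite (H1 E). assert (0 < Y) by (apply H2; lra). ccw_brute.
  - assert (Y < X) by (apply H3; lra). assert (0 < Y) by (apply H2; lra). ccw_brute.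
Qed.

Lemma refl_range X : 0 <= X < 1 -> 0 <= ccw X 0 < 1.
Proof. intros; ccw_brute. Qed.

Lemma refl_ccw Y Z : 0 <= Y < 1 -> 0 <= Z < 1 -> ccw Z Y = ccw (ccw Y 0) (ccw Z 0).
Proof. intros; ccw_brute. Qed.

Lemma trans_decr x y z X Y Z :
  0 <= x < 1 -> 0 <= y < 1 -> 0 <= z < 1 -> 0 <= X < 1 -> 0 <= Y < 1 -> 0 <= Z < 1 ->
  (x = 0 -> X = 0) -> (0 < x -> 0 < X) ->
  (y = 0 -> Y = 0) -> (0 < y -> 0 < Y) ->
  (z = 0 -> Z = 0) -> (0 < z -> 0 < Z) ->
  (0 < x -> x < y -> Y < X) -> (0 < y -> y < x -> X < Y) -> (x = y -> X = Y) ->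
  (0 < y -> y < z -> Z < Y) -> (0 < z -> z < y -> Y < Z) -> (y = z -> Y = Z) ->
  (0 < x -> x < z -> Z < X) -> (0 < z -> z < x -> X < Z) -> (x = z -> X = Z) ->
  ccw x y + ccw y z = ccw x z -> ccw Z Y + ccw Y X = ccw Z X.
Proof.
  intros.
  rewrite (refl_ccw Y Z), (refl_ccw X Y), (refl_ccw X Z) by auto.
  rewrite Rplus_comm.
  apply (trans_incr x y z); auto using refl_range.
  - intros; apply (refl_ord x y); auto.
  - intros; apply (refl_ord y x); auto.
  - intros E; subst; f_equal; auto.
  - intros; apply (refl_ord y z); auto.
  - intros; apply (refl_ord z y); auto.
  - intros E; subst; f_equal; auto.
  - intros; apply (refl_ord x z); auto.
  - intros; apply (refl_ord z x); auto.
  - intros E; subst; f_equal; auto.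
Qed.

Definition PC := pt Circle.
Definition v (p : PC) : R := proj1_sig p.
Lemma v_range (p : PC) : 0 <= v p < 1.
Proof. exact (proj2_sig p). Qed.
Lemma v_inj (p q : PC) : v p = v q -> p = q.
Proof. destruct p as [x hx], q as [y hy]; unfold v; simpl; intros ->. f_equal; apply proof_irrelevance. Qed.

Definition p0 : PC := exist (fun x => 0 <= x < 1) 0 (conj (Rle_refl 0) Rlt_0_1).
Lemma v_p0 : v p0 = 0. Proof. reflexivity. Qed.

Definition emb (t : R) : PC :=
  match Rle_dec 0 t with
  | left H1 => match Rlt_dec t 1 with
               | left H2 => exist (fun x => 0 <= x < 1) t (conj H1 H2)
               | right _ => p0 end
  | right _ => p0 end.

Lemma v_emb t : 0 <= t < 1 -> v (emb t) = t.
Proof. intros [H1 H2]. unfold emb. destruct (Rle_dec 0 t); [|contradiction].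
  destruct (Rlt_dec t 1); [reflexivity|contradiction]. Qed.

Lemma emb_v p : emb (v p) = p.
Proof. apply v_inj. apply v_emb, v_range. Qed.

Lemma dist_ccw (p q : PC) : Defs.dist Circle p q = Rmin (ccw (v p) (v q)) (ccw (v q) (v p)).
Proof. pose proof (v_range p); pose proof (v_range q). simpl. fold (v p) (v q).
  unfold Rmin, Rabs; repeat destruct Rle_dec; repeat destruct Rcase_abs; ccw_brute. Qed.

Lemma cdist_sym (p q : PC) : Defs.dist Circle p q = Defs.dist Circle q p.
Proof. rewrite !dist_ccw. apply Rmin_comm. Qed.

Lemma ccw_cont c V W eta : 0 <= c < 1 -> 0 <= V < 1 -> 0 <= W < 1 -> V <> c -> 0 < eta ->
  Rmin (ccw V W) (ccw W V) < Rmin eta (Rmin (ccw c V) (ccw V c)) ->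
  Rabs (ccw c W - ccw c V) < eta.
Proof.
  intros. unfold Rmin in *. repeat destruct Rle_dec; unfold Rabs; destruct Rcase_abs; ccw_brute.
Qed.

Definition pres (g : PC -> PC) := forall x y z : PC,
  ccw (v x) (v y) + ccw (v y) (v z) = ccw (v x) (v z) ->
  ccw (v (g x)) (v (g y)) + ccw (v (g y)) (v (g z)) = ccw (v (g x)) (v (g z)).
Definition orev (g : PC -> PC) := forall x y z : PC,
  ccw (v x) (v y) + ccw (v y) (v z) = ccw (v x) (v z) ->
  ccw (v (g z)) (v (g y)) + ccw (v (g y)) (v (g x)) = ccw (v (g z)) (v (g x)).

Section Dich.
Variable g : PC -> PC.
Hypothesis gc : mcontinuous Circle g.
Hypothesis gi : forall x y, g x = g y -> x = y.

Let c := v (g p0).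
Let U (x : PC) := ccw c (v (g x)).
Let u (t : R) := U (emb t).

Lemma U_range x : 0 <= U x < 1.
Proof. apply ccw_range; apply v_range. Qed.

Lemma U_p0 : U p0 = 0.
Proof. unfold U, c. apply ccw_xx. Qed.

Lemma U_0 x : U x = 0 -> x = p0.
Proof. intros H. apply gi. apply v_inj. symmetry. apply (ccw_eq0 c); auto; apply v_range. Qed.

Lemma U_inj x y : U x = U y -> x = y.
Proof. intros H. apply gi, v_inj. unfold U in H.
  pose proof (v_range (g x)). pose proof (v_range (g y)). pose proof (v_range (g p0)).
  fold c in H. unfold ccw in H. repeat destruct Rle_dec; lra. Qed.

Lemma gU x y : ccw (v (g x)) (v (g y)) = ccw (U x) (U y).
Proof. unfold U. rewrite ccw_rot; auto; apply v_range. Qed.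

Lemma u_cont t : 0 < t < 1 -> continuity_pt u t.
Proof.
  intros Ht. apply cont_pt_intro. intros eta Heta.
  set (V := v (g (emb t))).
  assert (HV : V <> c).
  { intros E. assert (emb t = p0) by (apply gi, v_inj; exact E).
    pose proof (v_emb t ltac:(lra)). rewrite H in H0. rewrite v_p0 in H0. lra. }
  assert (Hc := v_range (g p0)). assert (HVr := v_range (g (emb t))). fold c in Hc. fold V in HVr.
  set (m := Rmin eta (Rmin (ccw c V) (ccw V c))).
  assert (Hm : 0 < m).
  { unfold m. assert (ccw c V <> 0) by (intros E; apply ccw_eq0 in E; auto).
    assert (ccw V c <> 0) by (intros E; apply ccw_eq0 in E; auto).
    pose proof (ccw_range c V Hc HVr). pose proof (ccw_range V c HVr Hc).
    repeat apply Rmin_glb_lt; lra. }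
  destruct (gc (emb t) m Hm) as [d1 [Hd1 Hg]].
  exists (Rmin d1 (Rmin t (1 - t))). split.
  { repeat apply Rmin_glb_lt; lra. }
  intros y Hy.
  assert (Hy1 := Rlt_le_trans _ _ _ Hy (Rmin_l _ _)).
  assert (Hy2 := Rlt_le_trans _ _ _ Hy (Rle_trans _ _ _ (Rmin_r _ _) (Rmin_l _ _))).
  assert (Hy3 := Rlt_le_trans _ _ _ Hy (Rle_trans _ _ _ (Rmin_r _ _) (Rmin_r _ _))).
  assert (Hyr : 0 <= y < 1) by (unfold Rabs in *; destruct Rcase_abs; lra).
  assert (Hd : Defs.dist Circle (emb t) (emb y) < d1).
  { rewrite dist_ccw, v_emb, v_emb by lra. unfold Rmin, Rabs in *.
    repeat destruct Rle_dec; repeat destruct Rcase_abs; ccw_brute. }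
  specialize (Hg _ Hd). rewrite dist_ccw in Hg. fold V in Hg.
  unfold u, U. apply ccw_cont; auto; try apply v_range.
Qed.

Lemma u_inj x y : 0 < x < 1 -> 0 < y < 1 -> u x = u y -> x = y.
Proof. intros Hx Hy H. apply U_inj in H. rewrite <- (v_emb x), <- (v_emb y) by lra. rewrite H; auto. Qed.

Lemma u_dir : (forall x y, 0 < x < 1 -> 0 < y < 1 -> x < y -> u x < u y) \/
              (forall x y, 0 < x < 1 -> 0 < y < 1 -> x < y -> u y < u x).
Proof.
  destruct (Rtotal_order (u (1/4)) (u (3/4))) as [H|[H|H]].
  - left. intros x y Hx Hy Hxy.
    destruct (Mono2 u (Rmin x (1/4)) (Rmax y (3/4))) as [M|M].
    + unfold Rmin, Rmax; repeat destruct Rle_dec; lra.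
    + intros t Ht; apply u_cont. unfold Rmin, Rmax in *; repeat destruct Rle_dec; lra.
    + intros a b Ha Hb E; apply u_inj; auto; unfold Rmin, Rmax in *; repeat destruct Rle_dec; lra.
    + apply M; auto; unfold Rmin, Rmax in *; repeat destruct Rle_dec; lra.
    + exfalso. assert (u (3/4) < u (1/4)); [|lra].
      apply M; auto; unfold Rmin, Rmax in *; repeat destruct Rle_dec; lra.
  - apply u_inj in H; lra.
  - right. intros x y Hx Hy Hxy.
    destruct (Mono2 u (Rmin x (1/4)) (Rmax y (3/4))) as [M|M].
    + unfold Rmin, Rmax; repeat destruct Rle_dec; lra.
    + intros t Ht; apply u_cont. unfold Rmin, Rmax in *; repeat destruct Rle_dec; lra.
    + intros a b Ha Hb E; apply u_inj; auto; unfold Rmin, Rmax in *; repeat destruct Rle_dec; lra.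
    + exfalso. assert (u (1/4) < u (3/4)); [|lra].
      apply M; auto; unfold Rmin, Rmax in *; repeat destruct Rle_dec; lra.
    + apply M; auto; unfold Rmin, Rmax in *; repeat destruct Rle_dec; lra.
Qed.

Lemma U_pos x : 0 < v x -> 0 < U x.
Proof. intros H. destruct (U_range x) as [H1 _]. destruct H1 as [?|E]; auto.
  symmetry in E. apply U_0 in E. subst. rewrite v_p0 in H; lra. Qed.

Lemma U_u x : U x = u (v x).
Proof. unfold u. rewrite emb_v; auto. Qed.

Lemma dichotomy : pres g \/ orev g.
Proof.
  destruct u_dir as [Inc|Dec].
  - left. intros x y z H. rewrite !gU.
    assert (R : forall p q : PC, v p < v q -> U p < U q).
    { intros p q Hpq. pose proof (v_range p). pose proof (v_range q).
      destruct (Req_dec (v p) 0) as [E|E].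
      + assert (p = p0) by (apply v_inj; auto). subst. rewrite U_p0. apply U_pos; lra.
      + rewrite !U_u. apply Inc; auto; lra. }
    assert (Q : forall p q : PC, v p = v q -> U p = U q).
    { intros p q E; apply v_inj in E; subst; auto. }
    apply (trans_incr (v x) (v y) (v z)); auto using v_range, U_range.
  - right. intros x y z H. rewrite !gU.
    assert (R : forall p q : PC, 0 < v p -> v p < v q -> U q < U p).
    { intros p q Hp Hpq. pose proof (v_range p). pose proof (v_range q).
      rewrite !U_u. apply Dec; auto; lra. }
    assert (Q : forall p q : PC, v p = v q -> U p = U q).
    { intros p q E; apply v_inj in E; subst; auto. }
    assert (Z0 : forall p : PC, v p = 0 -> U p = 0).
    { intros p E. assert (p = p0) by (apply v_inj; auto). subst; apply U_p0. }
    apply (trans_decr (v x) (v y) (v z)); auto using v_range, U_range, U_pos.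
Qed.

End Dich.

Definition cinj (g : PC -> PC) := mcontinuous Circle g /\ forall x y, g x = g y -> x = y.

Lemma pc13 : 0 <= 1/3 < 1. Proof. lra. Qed.
Lemma pc23 : 0 <= 2/3 < 1. Proof. lra. Qed.
Definition p13 : PC := exist (fun x => 0 <= x < 1) (1/3) pc13.
Definition p23 : PC := exist (fun x => 0 <= x < 1) (2/3) pc23.

Lemma pres_rev_excl g : (forall x y, g x = g y -> x = y) -> pres g -> orev g -> False.
Proof.
  intros gi Hp Hr.
  assert (H : ccw (v p0) (v p13) + ccw (v p13) (v p23) = ccw (v p0) (v p23)).
  { unfold v; simpl; ccw_brute. }
  specialize (Hp _ _ _ H). specialize (Hr _ _ _ H).
  assert (N1 : v (g p0) <> v (g p13)) by (intros E; apply v_inj, gi in E; apply (f_equal v) in E; unfold v in E; simpl in E; lra).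
  assert (N2 : v (g p13) <> v (g p23)) by (intros E; apply v_inj, gi in E; apply (f_equal v) in E; unfold v in E; simpl in E; lra).
  assert (N3 : v (g p0) <> v (g p23)) by (intros E; apply v_inj, gi in E; apply (f_equal v) in E; unfold v in E; simpl in E; lra).
  pose proof (ccw_anti _ _ (v_range (g p0)) (v_range (g p13)) N1).
  pose proof (ccw_anti _ _ (v_range (g p13)) (v_range (g p23)) N2).
  pose proof (ccw_anti _ _ (v_range (g p0)) (v_range (g p23)) N3).
  lra.
Qed.

Lemma pres_comp g s : pres g -> pres s -> pres (fun x => g (s x)).
Proof. intros Hg Hs x y z H. apply Hg, Hs, H. Qed.
Lemma rev_rev_comp g s : orev g -> orev s -> pres (fun x => g (s x)).
Proof. intros Hg Hs x y z H. apply (Hg (s z) (s y) (s x)), Hs, H. Qed.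
Lemma pres_rev_comp g s : pres g -> orev s -> orev (fun x => g (s x)).
Proof. intros Hg Hs x y z H. apply (Hg (s z) (s y) (s x)), Hs, H. Qed.
Lemma rev_pres_comp g s : orev g -> pres s -> orev (fun x => g (s x)).
Proof. intros Hg Hs x y z H. apply Hg, Hs, H. Qed.

Definition ell (g : PC -> PC) (a b : PC) : R :=
  if excluded_middle_informative (pres g) then ccw (v (g a)) (v (g b)) else ccw (v (g b)) (v (g a)).

Lemma ell_range g a b : 0 <= ell g a b < 1.
Proof. unfold ell; destruct excluded_middle_informative; apply ccw_range; apply v_range. Qed.

Lemma ell_aa g a : ell g a a = 0.
Proof. unfold ell; destruct excluded_middle_informative; apply ccw_xx. Qed.

Lemma ell_anti g a b : (forall x y, g x = g y -> x = y) -> a <> b -> ell g a b + ell g b a = 1.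
Proof. intros gi Hab. assert (v (g a) <> v (g b)) by (intros E; apply v_inj, gi in E; auto).
  unfold ell; destruct excluded_middle_informative;
  [|rewrite Rplus_comm]; apply ccw_anti; auto using v_range. Qed.

Lemma ell_add g a b c : cinj g ->
  ccw (v a) (v b) + ccw (v b) (v c) = ccw (v a) (v c) -> ell g a b + ell g b c = ell g a c.
Proof. intros [gc gi] H. unfold ell; destruct excluded_middle_informative as [P|P].
  - apply P, H.
  - destruct (dichotomy g gc gi) as [Q|Q]; [contradiction|].
    rewrite Rplus_comm. apply Q, H. Qed.

Lemma ell_one g a b : ell g a b = ccw (v (g a)) (v (g b)) \/ ell g a b = ccw (v (g b)) (v (g a)).
Proof. unfold ell; destruct excluded_middle_informative; auto. Qed.

Lemma ell_id g a b : (forall x, g x = x) -> ell g a b = ccw (v a) (v b).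
Proof. intros Hg. unfold ell; destruct excluded_middle_informative as [P|P].
  - rewrite !Hg; auto.
  - exfalso; apply P. intros x y z. rewrite !Hg; auto. Qed.

Lemma cinj_comp g s : cinj g -> cinj s -> cinj (fun x => g (s x)).
Proof. intros [gc gi] [sc si]. split.
  - intros x e He. destruct (gc (s x) e He) as [d1 [Hd1 H1]].
    destruct (sc x d1 Hd1) as [d2 [Hd2 H2]]. exists d2; split; auto.
  - intros x y E; apply si, gi, E. Qed.

Lemma ell_comp_pres g s a b : cinj g -> cinj s -> pres s ->
  ell (fun x => g (s x)) a b = ell g (s a) (s b).
Proof.
  intros Hg Hs Ps. destruct (dichotomy g (proj1 Hg) (proj2 Hg)) as [Pg|Rg].
  - assert (P := pres_comp g s Pg Ps). unfold ell.
    destruct excluded_middle_informative; [|contradiction].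
    destruct excluded_middle_informative; [auto|contradiction].
  - assert (R := rev_pres_comp g s Rg Ps). unfold ell.
    destruct excluded_middle_informative as [P|].
    + exfalso; apply (pres_rev_excl _ (proj2 (cinj_comp g s Hg Hs)) P R).
    + destruct excluded_middle_informative as [P|]; auto.
      exfalso; apply (pres_rev_excl _ (proj2 Hg) P Rg).
Qed.

Lemma ell_comp_rev g s a b : cinj g -> cinj s -> orev s ->
  ell (fun x => g (s x)) a b = ell g (s b) (s a).
Proof.
  intros Hg Hs Rs. destruct (dichotomy g (proj1 Hg) (proj2 Hg)) as [Pg|Rg].
  - assert (R := pres_rev_comp g s Pg Rs). unfold ell.
    destruct excluded_middle_informative as [P|].
    + exfalso; apply (pres_rev_excl _ (proj2 (cinj_comp g s Hg Hs)) P R).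
    + destruct excluded_middle_informative; [auto|contradiction].
  - assert (P := rev_rev_comp g s Rg Rs). unfold ell.
    destruct excluded_middle_informative; [|contradiction].
    destruct excluded_middle_informative as [P'|]; auto.
    exfalso; apply (pres_rev_excl _ (proj2 Hg) P' Rg).
Qed.

Definition half (x : PC) : PC := emb (if Rlt_dec (v x) (1/2) then v x + 1/2 else v x - 1/2).
Lemma v_half x : v (half x) = (if Rlt_dec (v x) (1/2) then v x + 1/2 else v x - 1/2).
Proof. pose proof (v_range x). unfold half. apply v_emb. destruct Rlt_dec; lra. Qed.

Lemma dist_le_ccw a b : Defs.dist Circle a b <= ccw (v a) (v b).
Proof. rewrite dist_ccw. apply Rmin_l. Qed.

Lemma ell_CF g x : cinj g -> forall eta, 0 < eta -> exists delta, 0 < delta /\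
  forall y, ccw (v x) (v y) < delta -> ell g x y < eta.
Proof.
  intros Hg eta Heta. set (z := half x).
  assert (Hxz : x <> z).
  { intros E. assert (v x = v z) by (rewrite <- E; auto). unfold z in H; rewrite v_half in H.
    destruct Rlt_dec; lra. }
  set (L := ell g x z). assert (HL := ell_range g x z). fold L in HL.
  set (e' := Rmin eta (1 - L)).
  assert (He' : 0 < e') by (apply Rmin_glb_lt; lra).
  destruct (proj1 Hg x e' He') as [d1 [Hd1 H1]].
  exists (Rmin d1 (1/2)); split; [apply Rmin_glb_lt; lra|].
  intros y Hy.
  assert (Hadd : ell g x y + ell g y z = L).
  { apply ell_add; auto. pose proof (v_range x); pose proof (v_range y).
    assert (ccw (v x) (v y) < 1/2) by (eapply Rlt_le_trans; [exact Hy| apply Rmin_r]).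
    unfold z; rewrite v_half. destruct Rlt_dec; ccw_brute. }
  pose proof (ell_range g y z).
  destruct (classic (x = y)) as [<-|Hne]. { rewrite ell_aa; auto. }
  assert (Hd : Defs.dist Circle x y < d1).
  { eapply Rle_lt_trans; [apply dist_le_ccw|]. eapply Rlt_le_trans; [exact Hy|apply Rmin_l]. }
  specialize (H1 y Hd). rewrite dist_ccw in H1.
  assert (Hn : v (g x) <> v (g y)) by (intros E; apply v_inj, (proj2 Hg) in E; auto).
  pose proof (ccw_anti _ _ (v_range (g x)) (v_range (g y)) Hn).
  assert (e' <= eta) by apply Rmin_l. assert (e' <= 1 - L) by apply Rmin_r.
  destruct (ell_one g x y) as [E|E]; rewrite E in *; unfold Rmin in H1; destruct Rle_dec; lra.
Qed.

Lemma ell_CB g x : cinj g -> forall eta, 0 < eta -> exists delta, 0 < delta /\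
  forall y, ccw (v y) (v x) < delta -> ell g y x < eta.
Proof.
  intros Hg eta Heta. set (z := half x).
  assert (Hxz : x <> z).
  { intros E. assert (v x = v z) by (rewrite <- E; auto). unfold z in H; rewrite v_half in H.
    destruct Rlt_dec; lra. }
  set (L := ell g z x). assert (HL := ell_range g z x). fold L in HL.
  set (e' := Rmin eta (1 - L)).
  assert (He' : 0 < e') by (apply Rmin_glb_lt; lra).
  destruct (proj1 Hg x e' He') as [d1 [Hd1 H1]].
  exists (Rmin d1 (1/2)); split; [apply Rmin_glb_lt; lra|].
  intros y Hy.
  assert (Hadd : ell g z y + ell g y x = L).
  { apply ell_add; auto. pose proof (v_range x); pose proof (v_range y).
    assert (ccw (v y) (v x) < 1/2) by (eapply Rlt_le_trans; [exact Hy| apply Rmin_r]).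
    unfold z; rewrite v_half. destruct Rlt_dec; ccw_brute. }
  pose proof (ell_range g z y).
  destruct (classic (x = y)) as [<-|Hne]. { rewrite ell_aa; auto. }
  assert (Hd : Defs.dist Circle x y < d1).
  { rewrite cdist_sym. eapply Rle_lt_trans; [apply dist_le_ccw|]. eapply Rlt_le_trans; [exact Hy|apply Rmin_l]. }
  specialize (H1 y Hd). rewrite dist_ccw in H1.
  assert (Hn : v (g x) <> v (g y)) by (intros E; apply v_inj, (proj2 Hg) in E; auto).
  pose proof (ccw_anti _ _ (v_range (g x)) (v_range (g y)) Hn).
  assert (e' <= eta) by apply Rmin_l. assert (e' <= 1 - L) by apply Rmin_r.
  destruct (ell_one g y x) as [E|E]; rewrite E in *; unfold Rmin in H1; destruct Rle_dec; lra.
Qed.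

Section CoreC.
Variable I : Type.
Variable act : I -> PC -> PC.
Hypothesis act_ci : forall i, cinj (act i).
Variable B : nat -> list I.
Hypothesis Bnd : forall n, NoDup (B n).
Variable i0 : I.
Hypothesis Hi0 : In i0 (B 0).
Hypothesis Hid : forall x, act i0 x = x.
Variable eps : R.
Hypothesis eps_ge0 : 0 <= eps.
Hypothesis Bsum : ex_series (fun n => exp (- (eps * INR n)) * INR (length (B n))).

Definition Lf (a b : PC) : I -> R := fun i => ell (act i) a b.
Definition mu a b := Mu I B eps (Lf a b).
Definition Zc := Mu I B eps (fun _ => 1).

Lemma Lf_range a b i : 0 <= Lf a b i <= 1.
Proof. unfold Lf. pose proof (ell_range (act i) a b); lra. Qed.

Lemma mu_ge0 a b : 0 <= mu a b.
Proof. unfold mu. apply (Mu_ge0 I B eps Bsum (Lf a b) 1). apply Rle_0_1. apply Lf_range. Qed.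

Lemma mu_ge_ccw a b : ccw (v a) (v b) <= mu a b.
Proof. unfold mu. rewrite <- (ell_id (act i0) a b Hid).
  change (ell (act i0) a b) with (Lf a b i0). apply (Mu_In0 I B eps Bsum (Lf a b) 1 i0); auto. apply Rle_0_1. apply Lf_range. Qed.

Lemma Z_ge1 : 1 <= Zc.
Proof. unfold Zc. apply (Mu_In0 I B eps Bsum (fun _ => 1) 1 i0); auto; intros; lra. Qed.

Lemma mu_aa a : mu a a = 0.
Proof.
  apply Rle_antisym; [|apply mu_ge0]. unfold mu.
  replace 0 with (0 * Mu I B eps (fun _ => 1)) at 1 by ring.
  unfold Mu. rewrite <- Series_scal_l. apply Series_le.
  - intros n. unfold Lf. rewrite (lsum_ext _ (fun _ => 0)) by (intros; apply ell_aa).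
    rewrite (lsum_ext (fun _ => 0) (fun x => 0 * 1)) by (intros; ring).
    assert (lsum (fun _ : I => 0 * 1) (B n) = 0 * lsum (fun _ => 1) (B n)).
    { induction (B n); simpl; [ring|]. rewrite IHl. ring. }
    rewrite H. split; right; ring.
  - apply (ex_series_scal_l 0 (fun n => W eps n * lsum (fun _ : I => 1) (B n))).
    apply (ex_Mu I B eps Bsum _ 1). apply Rle_0_1. intros; lra.
Qed.

Lemma mu_anti a b : a <> b -> mu a b + mu b a = Zc.
Proof.
  intros Hab. unfold mu, Zc. rewrite <- (Mu_plus I B eps Bsum _ _ 1). 2: apply Rle_0_1. 2,3: apply Lf_range.
  apply Mu_ext. intros i. unfold Lf. apply ell_anti; auto. apply act_ci.
Qed.

Lemma mu_add a b c : ccw (v a) (v b) + ccw (v b) (v c) = ccw (v a) (v c) -> mu a b + mu b c = mu a c.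
Proof.
  intros H. unfold mu. rewrite <- (Mu_plus I B eps Bsum _ _ 1). 2: apply Rle_0_1. 2,3: apply Lf_range.
  apply Mu_ext. intros i. unfold Lf. apply ell_add; auto.
Qed.

Lemma mu_lt_Z a b : a <> b -> mu a b < Zc.
Proof. intros H. rewrite <- (mu_anti a b H). pose proof (mu_ge_ccw b a).
  assert (v b <> v a) by (intros E; apply v_inj in E; auto).
  assert (0 < ccw (v b) (v a)).
  { destruct (ccw_range (v b) (v a) (v_range b) (v_range a)) as [[?|E] _]; auto.
    symmetry in E; apply ccw_eq0 in E; auto using v_range; contradiction. }
  lra. Qed.

Definition Hval (x : PC) := mu p0 x / Zc.

Lemma Hval_range x : 0 <= Hval x < 1.
Proof. unfold Hval. pose proof Z_ge1. pose proof (mu_ge0 p0 x). split.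
  - apply Rmult_le_pos; [lra|]. left; apply Rinv_0_lt_compat; lra.
  - destruct (classic (x = p0)) as [->|Hn].
    + rewrite mu_aa. unfold Rdiv; rewrite Rmult_0_l; lra.
    + apply (Rmult_lt_reg_r Zc); [lra|]. unfold Rdiv. rewrite Rmult_assoc, Rinv_l by lra.
      rewrite Rmult_1_r, Rmult_1_l. apply mu_lt_Z; auto.
Qed.

Definition Hc (x : PC) : PC := exist (fun t => 0 <= t < 1) (Hval x) (Hval_range x).
Lemma v_Hc x : v (Hc x) = Hval x. Proof. reflexivity. Qed.

Lemma ccw_H a b : ccw (v (Hc a)) (v (Hc b)) = mu a b / Zc.
Proof.
  rewrite !v_Hc. unfold Hval. pose proof Z_ge1.
  pose proof (v_range a); pose proof (v_range b).
  destruct (classic (a = b)) as [<-|Hab]. { rewrite ccw_xx, mu_aa. unfold Rdiv; ring. }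
  assert (Hvab : v a <> v b) by (intros E; apply v_inj in E; auto).
  destruct (Rle_lt_dec (v a) (v b)) as [Hl|Hl].
  - assert (E : mu p0 a + mu a b = mu p0 b) by (apply mu_add; rewrite v_p0; ccw_brute).
    rewrite <- E. pose proof (mu_ge0 a b).
    assert (0 <= mu a b / Zc) by (apply Rmult_le_pos; [lra|left; apply Rinv_0_lt_compat; lra]).
    unfold ccw. destruct Rle_dec as [_|n]; [field; intro; lra|].
    exfalso; apply n. unfold Rdiv in *. rewrite Rmult_plus_distr_r. lra.
  - assert (E : mu p0 b + mu b a = mu p0 a) by (apply mu_add; rewrite v_p0; ccw_brute).
    rewrite <- E. assert (E2 := mu_anti b a (fun e => Hab (eq_sym e))).
    pose proof (mu_ge_ccw a b).
    assert (0 < ccw (v a) (v b)).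
    { destruct (ccw_range (v a) (v b) ltac:(auto) ltac:(auto)) as [[?|E3] _]; auto.
      symmetry in E3; apply ccw_eq0 in E3; auto; contradiction. }
    assert (mu b a = Zc - mu a b) by lra. rewrite H4.
    assert (0 < mu a b / Zc) by (apply Rmult_lt_0_compat; [lra|apply Rinv_0_lt_compat; lra]).
    assert (mu a b / Zc < 1).
    { unfold Rdiv; apply (Rmult_lt_reg_r Zc); [lra|]. rewrite Rmult_assoc, Rinv_l, Rmult_1_r, Rmult_1_l by (apply Rgt_not_eq; lra). apply mu_lt_Z; auto. }
    unfold ccw. destruct Rle_dec as [r|_].
    + exfalso. unfold Rdiv in *. rewrite Rmult_plus_distr_r, Rmult_minus_distr_r, Rinv_r in r by (apply Rgt_not_eq; lra). lra.
    + field; intro; lra.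
Qed.

Lemma Rmin_div p q z : 0 < z -> Rmin (p / z) (q / z) = Rmin p q / z.
Proof. intros Hz. assert (0 < / z) by (apply Rinv_0_lt_compat; lra). unfold Rdiv.
  destruct (Rle_dec p q).
  - rewrite !Rmin_left; auto. apply Rmult_le_compat_r; lra.
  - rewrite !Rmin_right; try lra. apply Rmult_le_compat_r; lra.
Qed.

Lemma dist_H a b : Defs.dist Circle (Hc a) (Hc b) = Rmin (mu a b) (mu b a) / Zc.
Proof. rewrite dist_ccw, !ccw_H. pose proof Z_ge1. apply Rmin_div; lra. Qed.

Lemma dist_le_H a b : Defs.dist Circle a b <= Zc * Defs.dist Circle (Hc a) (Hc b).
Proof. rewrite dist_H, dist_ccw. pose proof Z_ge1.
  replace (Zc * (Rmin (mu a b) (mu b a) / Zc)) with (Rmin (mu a b) (mu b a)) by (field; intro; lra).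
  pose proof (mu_ge_ccw a b). pose proof (mu_ge_ccw b a).
  unfold Rmin; repeat destruct Rle_dec; lra. Qed.

Lemma Hc_inj a b : Hc a = Hc b -> a = b.
Proof. intros E. pose proof (dist_le_H a b). rewrite E in H.
  assert (D0 : Defs.dist Circle (Hc b) (Hc b) = 0) by (rewrite dist_ccw, ccw_xx, Rmin_left; lra).
  rewrite D0, Rmult_0_r in H.
  rewrite dist_ccw in H. apply v_inj.
  pose proof (ccw_range (v a) (v b) (v_range a) (v_range b)).
  pose proof (ccw_range (v b) (v a) (v_range b) (v_range a)).
  unfold Rmin in H; destruct Rle_dec.
  - apply ccw_eq0; auto using v_range; lra.
  - symmetry; apply ccw_eq0; auto using v_range; lra.
Qed.

Lemma Hc_lip (s : PC -> PC) (r : I -> I) : cinj s ->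
  (forall n i, In i (B n) -> In (r i) (B (S n))) -> (forall i j, r i = r j -> i = j) ->
  (forall i x, act (r i) x = act i (s x)) ->
  forall a b, Defs.dist Circle (Hc (s a)) (Hc (s b)) <= exp eps * Defs.dist Circle (Hc a) (Hc b).
Proof.
  intros Hs Hr1 Hr2 Hr3 a b.
  assert (Er : forall i, act (r i) = fun x => act i (s x)) by (intros; apply functional_extensionality; auto).
  assert (Sh : forall a0 b0, Mu I B eps (fun i => Lf a0 b0 (r i)) <= exp eps * mu a0 b0).
  { intros. unfold mu. apply (Mu_shift I B eps Bnd Bsum (Lf a0 b0) 1 r); auto. apply Rle_0_1. apply Lf_range. }
  rewrite !dist_H. pose proof Z_ge1. pose proof (exp_pos eps).
  assert (K : forall p q p' q', p <= exp eps * p' -> q <= exp eps * q' ->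
             Rmin p q / Zc <= exp eps * (Rmin p' q' / Zc)).
  { intros. unfold Rdiv. rewrite <- Rmult_assoc. apply Rmult_le_compat_r; [left; apply Rinv_0_lt_compat; lra|].
    unfold Rmin; repeat destruct Rle_dec; nra. }
  destruct (dichotomy s (proj1 Hs) (proj2 Hs)) as [P|R].
  - apply K.
    + eapply Rle_trans; [|apply (Sh a b)]. right. unfold mu. apply Mu_ext. intros i. unfold Lf.
      rewrite Er. symmetry; apply ell_comp_pres; auto.
    + eapply Rle_trans; [|apply (Sh b a)]. right. unfold mu. apply Mu_ext. intros i. unfold Lf.
      rewrite Er. symmetry; apply ell_comp_pres; auto.
  - rewrite (Rmin_comm (mu a b)). apply K.
    + eapply Rle_trans; [|apply (Sh b a)]. right. unfold mu. apply Mu_ext. intros i. unfold Lf.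
      rewrite Er. symmetry; apply ell_comp_rev; auto.
    + eapply Rle_trans; [|apply (Sh a b)]. right. unfold mu. apply Mu_ext. intros i. unfold Lf.
      rewrite Er. symmetry; apply ell_comp_rev; auto.
Qed.

Lemma mu_CF x : forall eta, 0 < eta -> exists delta, 0 < delta /\
  forall y, ccw (v x) (v y) < delta -> mu x y < eta.
Proof.
  intros eta Heta. unfold mu.
  eapply (Mu_small I B eps eps_ge0 Bsum (fun y i => Lf x y i) (fun y => ccw (v x) (v y))); auto.
  - intros; apply Lf_range.
  - intros i e He. apply ell_CF; auto.
Qed.

Lemma mu_CB x : forall eta, 0 < eta -> exists delta, 0 < delta /\
  forall y, ccw (v y) (v x) < delta -> mu y x < eta.
Proof.
  intros eta Heta. unfold mu.
  eapply (Mu_small I B eps eps_ge0 Bsum (fun y i => Lf y x i) (fun y => ccw (v y) (v x))); auto.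
  - intros; apply Lf_range.
  - intros i e He. apply ell_CB; auto.
Qed.


Lemma Hc_cont : mcontinuous Circle Hc.
Proof.
  intros x eta Heta. pose proof Z_ge1.
  destruct (mu_CF x (eta * Zc)) as [d1 [Hd1 H1]]; [nra|].
  destruct (mu_CB x (eta * Zc)) as [d2 [Hd2 H2]]; [nra|].
  exists (Rmin d1 d2); split; [apply Rmin_glb_lt; auto|].
  intros y Hy. rewrite dist_H. rewrite dist_ccw in Hy.
  pose proof (mu_ge0 x y); pose proof (mu_ge0 y x).
  assert (Hm : Rmin (mu x y) (mu y x) < eta * Zc).
  { unfold Rmin in Hy. destruct Rle_dec.
    - assert (mu x y < eta * Zc) by (apply H1; eapply Rlt_le_trans; [exact Hy|apply Rmin_l]).
      eapply Rle_lt_trans; [apply Rmin_l|]; auto.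
    - assert (mu y x < eta * Zc) by (apply H2; eapply Rlt_le_trans; [exact Hy|apply Rmin_r]).
      eapply Rle_lt_trans; [apply Rmin_r|]; auto. }
  apply (Rmult_lt_reg_r Zc); [lra|]. unfold Rdiv. rewrite Rmult_assoc, Rinv_l, Rmult_1_r by (apply Rgt_not_eq; lra). auto.
Qed.

Lemma emb0 : emb 0 = p0.
Proof. apply v_inj. rewrite v_emb; [reflexivity|lra]. Qed.

Lemma Hval_p0 : Hval p0 = 0.
Proof. unfold Hval. rewrite mu_aa. unfold Rdiv; ring. Qed.

Lemma Hval_cont_real tau : 0 <= tau < 1 -> forall eta, 0 < eta -> exists delta, 0 < delta /\
  forall y, 0 <= y < 1 -> Rabs (y - tau) < delta -> Rabs (Hval (emb y) - Hval (emb tau)) < eta.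
Proof.
  intros Ht eta Heta. pose proof Z_ge1. set (x := emb tau).
  destruct (mu_CF x (eta * Zc)) as [d1 [Hd1 H1]]; [nra|].
  destruct (mu_CB x (eta * Zc)) as [d2 [Hd2 H2]]; [nra|].
  exists (Rmin d1 d2); split; [apply Rmin_glb_lt; auto|].
  intros y Hy Hyt. set (y' := emb y).
  assert (Vx : v x = tau) by (apply v_emb; auto). assert (Vy : v y' = y) by (apply v_emb; auto).
  assert (Hd1' := Rlt_le_trans _ _ _ Hyt (Rmin_l _ _)). assert (Hd2' := Rlt_le_trans _ _ _ Hyt (Rmin_r _ _)).
  unfold Hval. pose proof (mu_ge0 x y'); pose proof (mu_ge0 y' x).
  destruct (Rle_lt_dec tau y).
  - assert (E : mu p0 x + mu x y' = mu p0 y') by (apply mu_add; rewrite v_p0, Vx, Vy; ccw_brute).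
    assert (mu x y' < eta * Zc) by (apply H1; rewrite Vx, Vy; unfold Rabs in *; destruct Rcase_abs; ccw_brute).
    rewrite <- E. replace ((mu p0 x + mu x y') / Zc - mu p0 x / Zc) with (mu x y' / Zc) by (field; intro; lra).
    rewrite Rabs_pos_eq by (apply Rmult_le_pos; [lra|left; apply Rinv_0_lt_compat; lra]).
    apply (Rmult_lt_reg_r Zc); [lra|]. unfold Rdiv. rewrite Rmult_assoc, Rinv_l, Rmult_1_r by (apply Rgt_not_eq; lra). auto.
  - assert (E : mu p0 y' + mu y' x = mu p0 x) by (apply mu_add; rewrite v_p0, Vx, Vy; ccw_brute).
    assert (mu y' x < eta * Zc) by (apply H2; rewrite Vx, Vy; unfold Rabs in *; destruct Rcase_abs; ccw_brute).
    rewrite <- E. replace (mu p0 y' / Zc - (mu p0 y' + mu y' x) / Zc) with (- (mu y' x / Zc)) by (field; intro; lra).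
    rewrite Rabs_Ropp, Rabs_pos_eq by (apply Rmult_le_pos; [lra|left; apply Rinv_0_lt_compat; lra]).
    apply (Rmult_lt_reg_r Zc); [lra|]. unfold Rdiv. rewrite Rmult_assoc, Rinv_l, Rmult_1_r by (apply Rgt_not_eq; lra). auto.
Qed.

Lemma Hc_surj p : exists x, Hc x = p.
Proof.
  pose proof Z_ge1. set (t := v p). assert (Ht := v_range p). fold t in Ht.
  destruct (Req_dec t 0) as [E|Ne].
  - exists p0. apply v_inj. rewrite v_Hc, Hval_p0. fold t; auto.
  - destruct (mu_CB p0 ((1 - t) * Zc)) as [d [Hd Hc']]; [nra|].
    set (b := Rmax (1/2) (1 - d/2)).
    assert (Hb : 1/2 <= b < 1) by (unfold b, Rmax; destruct Rle_dec; lra).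
    assert (Hyb : mu (emb b) p0 < (1 - t) * Zc).
    { apply Hc'. rewrite v_emb, v_p0 by lra. unfold b, Rmax; destruct Rle_dec; ccw_brute. }
    assert (Hne : emb b <> p0).
    { intros E. apply (f_equal v) in E. rewrite v_emb, v_p0 in E; lra. }
    pose proof (mu_anti (emb b) p0 Hne).
    assert (Hvb : Hval (emb b) > t).
    { unfold Hval. apply (Rmult_lt_reg_r Zc); [lra|]. unfold Rdiv. rewrite Rmult_assoc, Rinv_l, Rmult_1_r by (apply Rgt_not_eq; lra). nra. }
    set (phi := fun tau => Hval (emb (clamp 0 b tau)) - t).
    destruct (IVT_loc phi 0 b ltac:(lra)) as [z [Hz Ez]].
    + intros tau Htau. apply cont_pt_intro. intros eta Heta.
      assert (Hc0 := clamp_in 0 b tau ltac:(lra)).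
      destruct (Hval_cont_real (clamp 0 b tau) ltac:(lra) eta Heta) as [d' [Hd' Hc2]].
      exists d'; split; auto. intros y Hy. unfold phi.
      replace (Hval (emb (clamp 0 b y)) - t - (Hval (emb (clamp 0 b tau)) - t))
        with (Hval (emb (clamp 0 b y)) - Hval (emb (clamp 0 b tau))) by ring.
      apply Hc2. pose proof (clamp_in 0 b y ltac:(lra)); lra.
      eapply Rle_lt_trans; [apply clamp_lip|]; auto.
    + unfold phi. rewrite !clamp_id by lra. rewrite emb0, Hval_p0. nra.
    + exists (emb z). apply v_inj. rewrite v_Hc. unfold phi in Ez. rewrite clamp_id in Ez by lra.
      fold t; lra.
Qed.

Theorem core_circle : exists H Hi : PC -> PC, homeo_pair Circle H Hi /\
  exists Z, 0 < Z /\ (forall a b, Defs.dist Circle a b <= Z * Defs.dist Circle (H a) (H b)) /\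
  (forall (s : PC -> PC) (r : I -> I), cinj s ->
     (forall n i, In i (B n) -> In (r i) (B (S n))) -> (forall i j, r i = r j -> i = j) ->
     (forall i x, act (r i) x = act i (s x)) ->
     forall a b, Defs.dist Circle (H (s a)) (H (s b)) <= exp eps * Defs.dist Circle (H a) (H b)).
Proof.
  set (Hi := fun p => proj1_sig (constructive_indefinite_description _ (Hc_surj p))).
  assert (HiS : forall p, Hc (Hi p) = p).
  { intros p. unfold Hi. destruct constructive_indefinite_description; auto. }
  pose proof Z_ge1.
  exists Hc, Hi. split; [split; [|split; [|split]]|].
  - intros x. apply Hc_inj. rewrite HiS; auto.
  - exact HiS.
  - exact Hc_cont.
  - intros p e He. exists (e / Zc). split; [apply Rmult_lt_0_compat; [lra|apply Rinv_0_lt_compat; lra]|].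
    intros q Hq. eapply Rle_lt_trans; [apply dist_le_H|]. rewrite !HiS.
    apply (Rmult_lt_reg_r (/ Zc)); [apply Rinv_0_lt_compat; lra|].
    replace (Zc * Defs.dist Circle p q * / Zc) with (Defs.dist Circle p q) by (field; intro; lra). exact Hq.
  - exists Zc. split; [lra|]. split; [apply dist_le_H|]. intros s r Hs H1 H2 H3. apply (Hc_lip s r); auto.
Qed.

End CoreC.

Definition PIt := pt Interval01.
Definition vI (p : PIt) : R := proj1_sig p.
Lemma vI_range (p : PIt) : 0 <= vI p <= 1.
Proof. exact (proj2_sig p). Qed.
Lemma vI_inj (p q : PIt) : vI p = vI q -> p = q.
Proof. destruct p as [x hx], q as [y hy]; unfold vI; simpl; intros ->. f_equal; apply proof_irrelevance. Qed.
Lemma distI (p q : PIt) : Defs.dist Interval01 p q = Rabs (vI p - vI q).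
Proof. reflexivity. Qed.

Lemma q01 : 0 <= 0 <= 1. Proof. lra. Qed.
Lemma q11 : 0 <= 1 <= 1. Proof. lra. Qed.
Definition q0 : PIt := exist (fun x => 0 <= x <= 1) 0 q01.
Definition q1 : PIt := exist (fun x => 0 <= x <= 1) 1 q11.
Definition clampI (t : R) : PIt := exist (fun x => 0 <= x <= 1) (clamp 0 1 t) (clamp_in 0 1 t ltac:(lra)).
Lemma vI_clampI t : vI (clampI t) = clamp 0 1 t. Proof. reflexivity. Qed.
Lemma clampI_v p : clampI (vI p) = p.
Proof. apply vI_inj. rewrite vI_clampI. apply clamp_id, vI_range. Qed.

Definition iinj (g : PIt -> PIt) := mcontinuous Interval01 g /\ forall x y, g x = g y -> x = y.

Lemma iinj_mono g : iinj g ->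
  (forall x y, vI x < vI y -> vI (g x) < vI (g y)) \/ (forall x y, vI x < vI y -> vI (g y) < vI (g x)).
Proof.
  intros [gc gi]. set (gr := fun t => vI (g (clampI t))).
  assert (Hc : forall t, continuity_pt gr t).
  { intros t. apply cont_pt_intro. intros e He. destruct (gc (clampI t) e He) as [d [Hd H]].
    exists d; split; auto. intros y Hy. unfold gr.
    specialize (H (clampI y)). rewrite !distI, !vI_clampI in H. rewrite Rabs_minus_sym. apply H.
    rewrite Rabs_minus_sym. eapply Rle_lt_trans; [apply clamp_lip|]; auto. }
  assert (Hi : forall x y, 0 <= x <= 1 -> 0 <= y <= 1 -> gr x = gr y -> x = y).
  { intros x y Hx Hy E. apply vI_inj, gi in E. apply (f_equal vI) in E. rewrite !vI_clampI, !clamp_id in E; auto. }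
  destruct (Mono2 gr 0 1 ltac:(lra) (fun t _ => Hc t) Hi) as [M|M].
  - left. intros x y Hxy. pose proof (vI_range x); pose proof (vI_range y).
    specialize (M _ _ H H0 Hxy). unfold gr in M. rewrite !clampI_v in M. auto.
  - right. intros x y Hxy. pose proof (vI_range x); pose proof (vI_range y).
    specialize (M _ _ H H0 Hxy). unfold gr in M. rewrite !clampI_v in M. auto.
Qed.

Lemma iinj_add g a b c : iinj g -> vI a <= vI b <= vI c ->
  Rabs (vI (g a) - vI (g b)) + Rabs (vI (g b) - vI (g c)) = Rabs (vI (g a) - vI (g c)).
Proof.
  intros Hg Hb. assert (Hgi := proj2 Hg).
  assert (Eq : forall x y, vI x = vI y -> vI (g x) = vI (g y)) by (intros x y E; apply vI_inj in E; subst; auto).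
  destruct (iinj_mono g Hg) as [M|M].
  - destruct Hb as [[H1|H1] [H2|H2]];
    [pose proof (M a b H1); pose proof (M b c H2)
    |pose proof (M a b H1); pose proof (Eq b c H2)
    |pose proof (Eq a b H1); pose proof (M b c H2)
    |pose proof (Eq a b H1); pose proof (Eq b c H2)];
    unfold Rabs; repeat destruct Rcase_abs; lra.
  - destruct Hb as [[H1|H1] [H2|H2]];
    [pose proof (M a b H1); pose proof (M b c H2)
    |pose proof (M a b H1); pose proof (Eq b c H2)
    |pose proof (Eq a b H1); pose proof (M b c H2)
    |pose proof (Eq a b H1); pose proof (Eq b c H2)];
    unfold Rabs; repeat destruct Rcase_abs; lra.
Qed.

Section CoreI.
Variable I : Type.
Variable act : I -> PIt -> PIt.
Hypothesis act_ci : forall i, iinj (act i).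
Variable B : nat -> list I.
Hypothesis Bnd : forall n, NoDup (B n).
Variable i0 : I.
Hypothesis Hi0 : In i0 (B 0).
Hypothesis Hid : forall x, act i0 x = x.
Variable eps : R.
Hypothesis eps_ge0 : 0 <= eps.
Hypothesis Bsum : ex_series (fun n => exp (- (eps * INR n)) * INR (length (B n))).

Definition LfI (a b : PIt) : I -> R := fun i => Rabs (vI (act i a) - vI (act i b)).
Definition muI a b := Mu I B eps (LfI a b).

Lemma LfI_range a b i : 0 <= LfI a b i <= 1.
Proof. unfold LfI. pose proof (vI_range (act i a)); pose proof (vI_range (act i b)).
  unfold Rabs; destruct Rcase_abs; lra. Qed.

Lemma muI_ge0 a b : 0 <= muI a b.
Proof. unfold muI. apply (Mu_ge0 I B eps Bsum (LfI a b) 1). apply Rle_0_1. apply LfI_range. Qed.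

Lemma muI_ge a b : Rabs (vI a - vI b) <= muI a b.
Proof. unfold muI. replace (Rabs (vI a - vI b)) with (LfI a b i0) by (unfold LfI; rewrite !Hid; auto).
  apply (Mu_In0 I B eps Bsum (LfI a b) 1 i0); auto. apply Rle_0_1. apply LfI_range. Qed.

Lemma muI_sym a b : muI a b = muI b a.
Proof. unfold muI. apply Mu_ext. intros i; unfold LfI; apply Rabs_minus_sym. Qed.

Lemma muI_add a b c : vI a <= vI b <= vI c -> muI a b + muI b c = muI a c.
Proof.
  intros H. unfold muI. rewrite <- (Mu_plus I B eps Bsum _ _ 1). 2: apply Rle_0_1. 2,3: apply LfI_range.
  apply Mu_ext. intros i. unfold LfI. apply iinj_add; auto.
Qed.

Lemma muI_aa a : muI a a = 0.
Proof. pose proof (muI_add a a a ltac:(lra)). lra. Qed.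

Definition ZI := muI q0 q1.
Lemma ZI_ge1 : 1 <= ZI.
Proof. unfold ZI. pose proof (muI_ge q0 q1). unfold vI in H; simpl in H.
  replace (Rabs (0 - 1)) with 1 in H by (rewrite Rabs_minus_sym, Rminus_0_r, Rabs_R1; auto). auto. Qed.

Definition HvalI x := muI q0 x / ZI.

Lemma HvalI_range x : 0 <= HvalI x <= 1.
Proof. unfold HvalI. pose proof ZI_ge1. pose proof (muI_ge0 q0 x). pose proof (muI_ge0 x q1).
  pose proof (vI_range x).
  assert (E : muI q0 x + muI x q1 = ZI) by (apply muI_add; change (vI q0) with 0; change (vI q1) with 1; lra).
  split.
  - apply Rmult_le_pos; [lra|]. left; apply Rinv_0_lt_compat; lra.
  - apply (Rmult_le_reg_r ZI); [lra|]. unfold Rdiv. rewrite Rmult_assoc, Rinv_l, Rmult_1_r by (apply Rgt_not_eq; lra). lra.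
Qed.

Definition HcI (x : PIt) : PIt := exist (fun t => 0 <= t <= 1) (HvalI x) (HvalI_range x).
Lemma vI_HcI x : vI (HcI x) = HvalI x. Proof. reflexivity. Qed.

Lemma HcI_dist a b : Defs.dist Interval01 (HcI a) (HcI b) = muI a b / ZI.
Proof.
  rewrite distI, !vI_HcI. unfold HvalI. pose proof ZI_ge1.
  assert (0 <= muI a b / ZI) by (apply Rmult_le_pos; [apply muI_ge0|left; apply Rinv_0_lt_compat; lra]).
  destruct (Rle_dec (vI a) (vI b)).
  - assert (E : muI q0 a + muI a b = muI q0 b) by (apply muI_add; pose proof (vI_range a); change (vI q0) with 0; lra).
    rewrite <- E. replace (muI q0 a / ZI - (muI q0 a + muI a b) / ZI) with (- (muI a b / ZI)) by (field; intro; lra).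
    rewrite Rabs_Ropp, Rabs_pos_eq; auto.
  - assert (E : muI q0 b + muI b a = muI q0 a) by (apply muI_add; pose proof (vI_range b); change (vI q0) with 0; lra).
    rewrite <- E, (muI_sym b a). replace ((muI q0 b + muI a b) / ZI - muI q0 b / ZI) with (muI a b / ZI) by (field; intro; lra).
    rewrite Rabs_pos_eq; auto.
Qed.

Lemma dist_le_HI a b : Defs.dist Interval01 a b <= ZI * Defs.dist Interval01 (HcI a) (HcI b).
Proof. rewrite HcI_dist, distI. pose proof ZI_ge1. pose proof (muI_ge a b).
  replace (ZI * (muI a b / ZI)) with (muI a b) by (field; intro; lra). auto. Qed.

Lemma HcI_inj a b : HcI a = HcI b -> a = b.
Proof. intros E. pose proof (dist_le_HI a b). rewrite E in H. rewrite (distI (HcI b)), Rminus_diag, Rabs_R0, Rmult_0_r in H.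
  rewrite distI in H. apply vI_inj. pose proof (Rabs_pos (vI a - vI b)).
  assert (Rabs (vI a - vI b) = 0) by lra. unfold Rabs in H1; destruct Rcase_abs; lra. Qed.

Lemma HcI_lip (s : PIt -> PIt) (r : I -> I) :
  (forall n i, In i (B n) -> In (r i) (B (S n))) -> (forall i j, r i = r j -> i = j) ->
  (forall i x, act (r i) x = act i (s x)) ->
  forall a b, Defs.dist Interval01 (HcI (s a)) (HcI (s b)) <= exp eps * Defs.dist Interval01 (HcI a) (HcI b).
Proof.
  intros Hr1 Hr2 Hr3 a b. rewrite !HcI_dist. pose proof ZI_ge1.
  assert (Sh : muI (s a) (s b) <= exp eps * muI a b).
  { unfold muI. rewrite (Mu_ext I B eps (LfI (s a) (s b)) (fun i => LfI a b (r i))).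
    - apply (Mu_shift I B eps Bnd Bsum (LfI a b) 1 r); auto. apply Rle_0_1. apply LfI_range.
    - intros i; unfold LfI; rewrite !Hr3; auto. }
  unfold Rdiv. rewrite <- Rmult_assoc. apply Rmult_le_compat_r; [left; apply Rinv_0_lt_compat; lra|auto].
Qed.

Lemma muI_small x : forall eta, 0 < eta -> exists delta, 0 < delta /\
  forall y, Rabs (vI x - vI y) < delta -> muI x y < eta.
Proof.
  intros eta Heta. unfold muI.
  eapply (Mu_small I B eps eps_ge0 Bsum (fun y i => LfI x y i) (fun y => Rabs (vI x - vI y))); auto.
  - intros; apply LfI_range.
  - intros i e He. destruct (proj1 (act_ci i) x e He) as [d [Hd H]].
    exists d; split; [auto|intros y Hy; apply (H y); rewrite ?distI; auto].
Qed.

Lemma HcI_cont : mcontinuous Interval01 HcI.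
Proof.
  intros x eta Heta. pose proof ZI_ge1.
  destruct (muI_small x (eta * ZI)) as [d [Hd H1]]; [nra|].
  exists d; split; auto. intros y Hy. rewrite HcI_dist. rewrite distI in Hy.
  specialize (H1 y Hy).
  apply (Rmult_lt_reg_r ZI); [lra|]. unfold Rdiv. rewrite Rmult_assoc, Rinv_l, Rmult_1_r by (apply Rgt_not_eq; lra). auto.
Qed.

Lemma HcI_surj p : exists x, HcI x = p.
Proof.
  pose proof ZI_ge1. set (t := vI p). assert (Ht := vI_range p). fold t in Ht.
  set (phi := fun tau => HvalI (clampI tau) - t).
  destruct (IVT_loc phi 0 1 ltac:(lra)) as [z [Hz Ez]].
  - intros tau _. apply cont_pt_intro. intros eta Heta.
    destruct (HcI_cont (clampI tau) eta Heta) as [d [Hd H1]].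
    exists d; split; auto. intros y Hy. unfold phi.
    replace (HvalI (clampI y) - t - (HvalI (clampI tau) - t)) with (HvalI (clampI y) - HvalI (clampI tau)) by ring.
    specialize (H1 (clampI y)). rewrite !distI, !vI_HcI, !vI_clampI in H1.
    rewrite Rabs_minus_sym. apply H1. rewrite Rabs_minus_sym. eapply Rle_lt_trans; [apply clamp_lip|]; auto.
  - unfold phi. replace (clampI 0) with q0 by (apply vI_inj; rewrite vI_clampI, clamp_id; [reflexivity|lra]).
    replace (clampI 1) with q1 by (apply vI_inj; rewrite vI_clampI, clamp_id; [reflexivity|lra]).
    unfold HvalI. rewrite muI_aa. fold ZI. replace (ZI / ZI) with 1 by (field; intro; lra).
    unfold Rdiv; rewrite Rmult_0_l. nra.
  - exists (clampI z). apply vI_inj. rewrite vI_HcI. unfold phi in Ez. fold t; lra.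
Qed.

Theorem core_interval : exists H Hi : PIt -> PIt, homeo_pair Interval01 H Hi /\
  exists Z, 0 < Z /\ (forall a b, Defs.dist Interval01 a b <= Z * Defs.dist Interval01 (H a) (H b)) /\
  (forall (s : PIt -> PIt) (r : I -> I),
     (forall n i, In i (B n) -> In (r i) (B (S n))) -> (forall i j, r i = r j -> i = j) ->
     (forall i x, act (r i) x = act i (s x)) ->
     forall a b, Defs.dist Interval01 (H (s a)) (H (s b)) <= exp eps * Defs.dist Interval01 (H a) (H b)).
Proof.
  set (Hi := fun p => proj1_sig (constructive_indefinite_description _ (HcI_surj p))).
  assert (HiS : forall p, HcI (Hi p) = p).
  { intros p. unfold Hi. destruct constructive_indefinite_description; auto. }
  pose proof ZI_ge1.
  exists HcI, Hi. split; [split; [|split; [|split]]|].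
  - intros x. apply HcI_inj. rewrite HiS; auto.
  - exact HiS.
  - exact HcI_cont.
  - intros p e He. exists (e / ZI). split; [apply Rmult_lt_0_compat; [lra|apply Rinv_0_lt_compat; lra]|].
    intros q Hq. eapply Rle_lt_trans; [apply dist_le_HI|]. rewrite !HiS.
    apply (Rmult_lt_reg_r (/ ZI)); [apply Rinv_0_lt_compat; lra|].
    replace (ZI * Defs.dist Interval01 p q * / ZI) with (Defs.dist Interval01 p q) by (field; intro; lra). exact Hq.
  - exists ZI. split; [lra|]. split; [apply dist_le_HI|]. intros s r H1 H2 H3. apply (HcI_lip s r); auto.
Qed.

End CoreI.

Lemma exp_pow_nat x m : exp (x * INR m) = exp x ^ m.
Proof. induction m; simpl pow. - simpl; rewrite Rmult_0_r, exp_0; auto.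
  - rewrite S_INR, Rmult_plus_distr_l, Rmult_1_r, exp_plus, IHm. ring. Qed.

Lemma ex_series_bound (a : nat -> R) K q N : 0 <= K -> 0 <= q < 1 ->
  (forall n, 0 <= a n) -> (forall n, (N <= n)%nat -> a n <= K * q ^ n) -> ex_series a.
Proof.
  intros HK Hq H0 H. apply (proj2 (ex_series_incr_n a N)).
  apply ex_series_le_R with (b := fun k => (K * q ^ N) * q ^ k).
  - intros k; split; auto. rewrite Rmult_assoc, <- pow_add. apply H; lia.
  - apply (ex_series_scal_l (K * q ^ N) (fun k => q ^ k)). apply ex_series_geom.
    rewrite Rabs_pos_eq; lra.
Qed.

Lemma q_half eps : 0 < eps -> 0 <= exp (- (eps / 2)) < 1.
Proof. intros. split; [left; apply exp_pos|]. rewrite <- exp_0. apply exp_increasing. lra. Qed.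

Section GroupInst.
Variable G : Group.
Variable gens : list G.

Lemma word_eval_app w s : word_eval G (w ++ [s]) = gmul G (word_eval G w) s.
Proof. induction w as [|a w IH]; simpl.
  - rewrite gmul1r, gmul1l; auto.
  - rewrite IH, gmulA; auto. Qed.

Lemma in_ball_mul n g s : In s gens -> in_ball G gens n g -> in_ball G gens (S n) (gmul G g s).
Proof. intros Hs [w [Hw [Hl He]]]. exists (w ++ [s]). split; [|split].
  - intros x Hx. apply in_app_or in Hx. destruct Hx as [?|[<-|[]]]; auto.
  - rewrite length_app; simpl; lia.
  - rewrite word_eval_app, He; auto. Qed.

Lemma mul_inj s g h : gmul G g s = gmul G h s -> g = h.
Proof. intros E. apply (f_equal (fun x => gmul G x (ginv G s))) in E.
  rewrite <- !gmulA, gmulVr, !gmul1r in E; auto. Qed.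

Lemma in_ball_one n : in_ball G gens n (gone G).
Proof. exists []. split; [intros ? []|split; [simpl; lia|reflexivity]]. Qed.
End GroupInst.

Lemma subexp_series (c : nat -> nat) eps : 0 < eps -> (forall n, (1 <= c n)%nat) ->
  Un_cv (fun n => ln (INR (c n)) / INR n) 0 ->
  ex_series (fun n => exp (- (eps * INR n)) * INR (c n)).
Proof.
  intros He Hc Hu. destruct (Hu (eps / 2) ltac:(lra)) as [N HN].
  apply (ex_series_bound _ 1 (exp (- (eps / 2))) (S N)); [lra|apply q_half; auto| |].
  - intros n; apply Rmult_le_pos; [left; apply exp_pos|apply pos_INR].
  - intros n Hn. specialize (HN n ltac:(lia)). unfold R_dist in HN. rewrite Rminus_0_r in HN.
    assert (Hn0 : 0 < INR n) by (apply lt_0_INR; lia).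
    assert (Hc0 : 0 < INR (c n)) by (apply lt_0_INR; specialize (Hc n); lia).
    assert (Hl : ln (INR (c n)) < eps / 2 * INR n).
    { apply Rabs_def2 in HN. destruct HN as [HN _].
      apply (Rmult_lt_compat_r (INR n)) in HN; auto. unfold Rdiv in HN.
      rewrite Rmult_assoc, Rinv_l, Rmult_1_r in HN by lra. lra. }
    rewrite <- exp_pow_nat, Rmult_1_l.
    rewrite <- (exp_ln (INR (c n))) at 1 by auto. rewrite <- exp_plus.
    left. apply exp_increasing. lra.
Qed.

Lemma nat_series eps : 0 < eps -> ex_series (fun n => exp (- (eps * INR n)) * INR (S n)).
Proof.
  intros He. apply (ex_series_bound _ (1 + 2 / eps) (exp (- (eps / 2))) 0); [|apply q_half; auto| |].
  - assert (0 < 2 / eps) by (apply Rdiv_lt_0_compat; lra). lra.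
  - intros n; apply Rmult_le_pos; [left; apply exp_pos|apply pos_INR].
  - intros n _. rewrite <- exp_pow_nat.
    assert (E1 : exp (- (eps * INR n)) * exp (eps / 2 * INR n) = exp (- (eps / 2) * INR n)).
    { rewrite <- exp_plus. f_equal. field. }
    assert (Hx : 1 + eps / 2 * INR n <= exp (eps / 2 * INR n)).
    { destruct (Req_dec (eps / 2 * INR n) 0) as [Z|Z]. rewrite Z, exp_0; lra.
      left; apply exp_ineq1. pose proof (pos_INR n). nra. }
    assert (INR (S n) <= (1 + 2 / eps) * exp (eps / 2 * INR n)).
    { rewrite S_INR. pose proof (pos_INR n).
      assert (0 < 2 / eps) by (apply Rdiv_lt_0_compat; lra).
      assert ((1 + 2 / eps) * (1 + eps / 2 * INR n) = 1 + INR n + 2 / eps + eps / 2 * INR n)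
        by (field; lra).
      assert (0 <= eps / 2 * INR n) by nra. nra. }
    rewrite <- E1. pose proof (exp_pos (- (eps * INR n))). nra.
Qed.

Lemma mcont_comp M (f g : pt M -> pt M) : mcontinuous M f -> mcontinuous M g -> mcontinuous M (fun x => f (g x)).
Proof. intros Hf Hg x e He. destruct (Hf (g x) e He) as [d1 [Hd1 H1]].
  destruct (Hg x d1 Hd1) as [d2 [Hd2 H2]]. exists d2; split; auto. Qed.

Lemma mcont_id M : mcontinuous M (fun x => x).
Proof. intros x e He. exists e; split; auto. Qed.

Lemma homeo_cinj (f : PC -> PC) : is_homeo Circle f -> cinj f.
Proof. intros [fi [H1 [H2 [H3 H4]]]]. split; auto. intros x y E.
  rewrite <- (H1 x), <- (H1 y), E; auto. Qed.

Lemma homeo_iinj (f : PIt -> PIt) : is_homeo Interval01 f -> iinj f.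
Proof. intros [fi [H1 [H2 [H3 H4]]]]. split; auto. intros x y E.
  rewrite <- (H1 x), <- (H1 y), E; auto. Qed.

Lemma iter_cinj (f : PC -> PC) k : cinj f -> cinj (Nat.iter k f).
Proof. intros Hf. induction k; simpl.
  - split; [apply mcont_id|auto].
  - apply (cinj_comp f (Nat.iter k f)); auto. Qed.

Lemma iter_succ_r {A} (f : A -> A) k x : Nat.iter k f (f x) = Nat.iter (S k) f x.
Proof. induction k; simpl; auto. rewrite IHk; auto. Qed.

Lemma circle_Zcore (f : PC -> PC) eps : is_homeo Circle f -> 0 < eps ->
  exists H Hi : PC -> PC, homeo_pair Circle H Hi /\
  exists Z, 0 < Z /\ (forall a b, Defs.dist Circle a b <= Z * Defs.dist Circle (H a) (H b)) /\
  (forall a b, Defs.dist Circle (H (f a)) (H (f b)) <= exp eps * Defs.dist Circle (H a) (H b)).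
Proof.
  intros Hf He. assert (Hfc := homeo_cinj f Hf).
  destruct (core_circle nat (fun k => Nat.iter k f) (fun k => iter_cinj f k Hfc)
     (fun n => seq 0 (S n)) (fun n => seq_NoDup _ _) 0%nat ltac:(simpl; auto) (fun x => eq_refl)
     eps ltac:(lra)) as [H [Hi [Hp [Z [HZ [H1 H2]]]]]].
  { eapply ex_series_ext; [|apply (nat_series eps He)]. intros n. simpl. rewrite length_seq. auto. }
  exists H, Hi; split; auto. exists Z; split; auto; split; auto.
  intros a b. apply (H2 f S Hfc); auto.
  - intros n i Hi'. apply in_seq in Hi'. apply in_seq. lia.
  - intros i x. apply eq_sym, iter_succ_r.
Qed.

Lemma count_sep (m : list PC) rho : 0 < rho -> NoDup m ->
  (forall x y, In x m -> In y m -> x <> y -> rho < Defs.dist Circle x y) ->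
  INR (length m) <= 1 / rho + 1.
Proof.
  intros Hr Hnd Hsep.
  set (bz := fun x : PC => Int_part (v x / rho)).
  set (K := Int_part (1 / rho)).
  assert (Hb0 : forall x, (0 <= bz x)%Z).
  { intros x. unfold bz. pose proof (base_Int_part (v x / rho)). pose proof (v_range x).
    assert (0 <= v x / rho) by (apply Rmult_le_pos; [lra|left; apply Rinv_0_lt_compat; lra]).
    apply Z.lt_pred_le. apply lt_IZR. rewrite <- Z.sub_1_r, minus_IZR. simpl. lra. }
  assert (HK0 : (0 <= K)%Z).
  { unfold K. pose proof (base_Int_part (1 / rho)).
    assert (0 <= 1 / rho) by (apply Rmult_le_pos; [lra|left; apply Rinv_0_lt_compat; lra]).
    apply Z.lt_pred_le. apply lt_IZR. rewrite <- Z.sub_1_r, minus_IZR. simpl. lra. }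
  assert (HbK : forall x, (bz x <= K)%Z).
  { intros x. unfold bz, K. pose proof (base_Int_part (v x / rho)). pose proof (base_Int_part (1 / rho)).
    pose proof (v_range x).
    assert (v x / rho < 1 / rho) by (unfold Rdiv; apply Rmult_lt_compat_r; [apply Rinv_0_lt_compat|]; lra).
    apply Z.lt_succ_r. apply lt_IZR. rewrite succ_IZR. lra. }
  set (b := fun x => Z.to_nat (bz x)).
  assert (Hbinj : forall x y, In x m -> In y m -> b x = b y -> x = y).
  { intros x y Hx Hy E. destruct (classic (x = y)) as [?|Hne]; auto. exfalso.
    specialize (Hsep x y Hx Hy Hne).
    assert (Ez : bz x = bz y) by (apply Z2Nat.inj; auto).
    unfold bz in Ez. pose proof (base_Int_part (v x / rho)). pose proof (base_Int_part (v y / rho)).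
    rewrite Ez in H. assert (Rabs (v x / rho - v y / rho) < 1) by (unfold Rabs; destruct Rcase_abs; lra).
    assert (Rabs (v x - v y) < rho).
    { replace (v x - v y) with (rho * (v x / rho - v y / rho)) by (field; lra).
      rewrite Rabs_mult, Rabs_pos_eq by lra. nra. }
    rewrite dist_ccw in Hsep. pose proof (v_range x); pose proof (v_range y).
    unfold Rmin, Rabs in *; repeat destruct Rle_dec; repeat destruct Rcase_abs; ccw_brute. }
  assert (Hl : (length (map b m) <= length (seq 0 (S (Z.to_nat K))))%nat).
  { apply NoDup_incl_length.
    - apply NoDup_map_NoDup_ForallPairs; [intros x y Hx Hy; apply Hbinj; auto | auto].
    - intros z Hz. apply in_map_iff in Hz. destruct Hz as [x [<- Hx]]. apply in_seq.
      unfold b. specialize (HbK x). specialize (Hb0 x). lia. }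
  rewrite length_map, length_seq in Hl. apply le_INR in Hl. rewrite S_INR, (INR_IZR_INZ (Z.to_nat K)), Z2Nat.id in Hl by auto.
  pose proof (base_Int_part (1 / rho)). fold K in H. lra.
Qed.

Lemma part1 : forall (M : cc1) (G : Group) (act : G -> pt M -> pt M) (gens : list G),
     is_homeo_action G M act ->
     symmetric_set G gens ->
     generates G gens ->
     subexp_growth G gens ->
     forall eps : R, 0 < eps ->
       exists h hi : pt M -> pt M, homeo_pair M h hi /\
         forall s, In s gens -> lipschitz M (exp eps) (fun x => h (act s (hi x))).
Proof.
  intros M G act gens [Ha1 [Ha2 Ha3]] _ _ [c [Hc Hu]] eps Heps.
  set (B := fun n => proj1_sig (constructive_indefinite_description _ (Hc n))).
  assert (HB : forall n, NoDup (B n) /\ (forall g, In g (B n) <-> in_ball G gens n g) /\ length (B n) = c n).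
  { intros n. unfold B. destruct constructive_indefinite_description; auto. }
  assert (Bnd : forall n, NoDup (B n)) by (intros n; apply HB).
  assert (Bone : forall n, In (gone G) (B n)) by (intros n; apply HB, in_ball_one).
  assert (Bmul : forall s, In s gens -> forall n g, In g (B n) -> In (gmul G g s) (B (S n))).
  { intros s Hs n g Hg. apply HB. apply in_ball_mul; auto. apply HB; auto. }
  assert (Hc1 : forall n, (1 <= c n)%nat).
  { intros n. destruct (HB n) as [_ [_ E]]. rewrite <- E. specialize (Bone n).
    destruct (B n); simpl in *; [contradiction|lia]. }
  assert (Bsum : ex_series (fun n => exp (- (eps * INR n)) * INR (length (B n)))).
  { eapply ex_series_ext; [|apply (subexp_series c eps Heps Hc1 Hu)].
    intros n; simpl. destruct (HB n) as [_ [_ E]]. rewrite E; auto. }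
  assert (Hr : forall s g h, gmul G g s = gmul G h s -> g = h) by (intros; eapply mul_inj; eauto).
  destruct M.
  - destruct (core_interval G act (fun i => homeo_iinj _ (Ha3 i)) B Bnd (gone G) (Bone 0%nat) Ha1 eps
       ltac:(lra) Bsum) as [h [hi [Hp [Z [HZ [H1 H2]]]]]].
    exists h, hi. split; auto. intros s Hs x y.
    pose proof (H2 (act s) (fun g => gmul G g s) (Bmul s Hs) (Hr s) (fun i x => Ha2 i s x) (hi x) (hi y)) as L.
    destruct Hp as [_ [Hp2 _]]. rewrite !Hp2 in L. exact L.
  - destruct (core_circle G act (fun i => homeo_cinj _ (Ha3 i)) B Bnd (gone G) (Bone 0%nat) Ha1 eps
       ltac:(lra) Bsum) as [h [hi [Hp [Z [HZ [H1 H2]]]]]].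
    exists h, hi. split; auto. intros s Hs x y.
    pose proof (H2 (act s) (fun g => gmul G g s) (homeo_cinj _ (Ha3 s)) (Bmul s Hs) (Hr s) (fun i x => Ha2 i s x) (hi x) (hi y)) as L.
    destruct Hp as [_ [Hp2 _]]. rewrite !Hp2 in L. exact L.
Qed.

Lemma part2 : forall f : pt Circle -> pt Circle, is_homeo Circle f ->
     forall eps : R, 0 < eps ->
       exists h hi : pt Circle -> pt Circle, homeo_pair Circle h hi /\
         is_homeo Circle (fun x => h (f (hi x))) /\
         lipschitz Circle (exp eps) (fun x => h (f (hi x))).
Proof.
  intros f Hf eps He.
  destruct (circle_Zcore f eps Hf He) as [h [hi [Hp [Z [HZ [H1 H2]]]]]].
  exists h, hi. split; auto. destruct Hp as [P1 [P2 [P3 P4]]].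
  destruct Hf as [fi [F1 [F2 [F3 F4]]]].
  split.
  - exists (fun x => h (fi (hi x))). split; [|split; [|split]].
    + intros x. rewrite P1, F1, P2; auto.
    + intros x. rewrite P1, F2, P2; auto.
    + apply mcont_comp; auto. apply mcont_comp; auto.
    + apply mcont_comp; auto. apply mcont_comp; auto.
  - intros x y. pose proof (H2 (hi x) (hi y)). rewrite !P2 in H. exact H.
Qed.

Lemma part3 : forall f : pt Circle -> pt Circle, is_homeo Circle f -> top_entropy_zero Circle f.
Proof.
  intros f Hf delta Hd eta Heta.
  destruct (circle_Zcore f (eta / 2) Hf ltac:(lra)) as [h [hi [Hp [Z [HZ [H1 H2]]]]]].
  set (L := exp (eta / 2)).
  assert (HL : 1 <= L) by (unfold L; rewrite <- exp_0; left; apply exp_increasing; lra).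
  assert (Hit : forall k a b, Defs.dist Circle (h (Nat.iter k f a)) (h (Nat.iter k f b)) <= L ^ k * Defs.dist Circle (h a) (h b)).
  { induction k; intros a b; simpl. lra.
    eapply Rle_trans; [apply H2|]. fold L. rewrite Rmult_assoc. apply Rmult_le_compat_l; [lra|auto]. }
  assert (Hinj : forall x y, h x = h y -> x = y).
  { intros x y E. destruct Hp as [P1 _]. rewrite <- (P1 x), <- (P1 y), E; auto. }
  destruct (INR_archimed (eta / 2) (Z / delta) ltac:(lra)) as [N HN].
  exists N. intros n Hn l [Hnd Hsep].
  assert (Hdpos : forall a b, 0 <= Defs.dist Circle a b).
  { intros a b. rewrite dist_ccw. pose proof (ccw_range (v a) (v b) (v_range a) (v_range b)).
    pose proof (ccw_range (v b) (v a) (v_range b) (v_range a)). unfold Rmin; destruct Rle_dec; lra. }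
  assert (HLn : 1 <= L ^ n) by (rewrite <- (pow1 n); apply pow_incr; lra).
  set (rho := delta / (Z * L ^ n)).
  assert (Hrho : 0 < rho) by (unfold rho; apply Rdiv_lt_0_compat; [lra|nra]).
  assert (Hcnt := count_sep (map h l) rho Hrho).
  rewrite length_map in Hcnt.
  assert (Hl : INR (length l) <= 1 / rho + 1).
  { apply Hcnt.
    - apply NoDup_map_inj; auto.
    - intros x' y' Hx Hy Hne. apply in_map_iff in Hx, Hy.
      destruct Hx as [x [<- Hx]]. destruct Hy as [y [<- Hy]].
      assert (Hxy : x <> y) by (intros ->; auto).
      destruct (Hsep x y Hx Hy Hxy) as [k [Hk Hkd]].
      assert (Defs.dist Circle (Nat.iter k f x) (Nat.iter k f y) <= Z * (L ^ n * Defs.dist Circle (h x) (h y))).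
      { eapply Rle_trans; [apply H1|]. apply Rmult_le_compat_l; [lra|].
        eapply Rle_trans; [apply Hit|]. apply Rmult_le_compat_r; [apply Hdpos|].
        apply Rle_pow; auto; lia. }
      unfold rho. apply (Rmult_lt_reg_r (Z * L ^ n)); [nra|].
      unfold Rdiv. rewrite Rmult_assoc, Rinv_l, Rmult_1_r by (apply Rgt_not_eq; nra). nra. }
  assert (E1 : 1 / rho = Z / delta * L ^ n) by (unfold rho; field; split; lra).
  rewrite E1 in Hl.
  set (X := L ^ n).
  assert (HX : X = exp (eta / 2 * INR n)) by (unfold X, L; rewrite exp_pow_nat; auto).
  assert (HX2 : exp (eta * INR n) = X * X) by (rewrite HX, <- exp_plus; f_equal; field).
  assert (HXb : Z / delta + 1 <= X).
  { rewrite HX. apply le_INR in Hn.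
    assert (1 + eta / 2 * INR n <= exp (eta / 2 * INR n)).
    { destruct (Req_dec (eta / 2 * INR n) 0) as [Q|Q]. rewrite Q, exp_0; lra.
      left; apply exp_ineq1. pose proof (pos_INR n). nra. }
    nra. }
  rewrite HX2. fold X in Hl.
  assert (0 <= Z / delta) by (apply Rmult_le_pos; [lra|left; apply Rinv_0_lt_compat; lra]).
  nra.
Qed.

Theorem mainTheorem2 :
  (forall (M : cc1) (G : Group) (act : G -> pt M -> pt M) (gens : list G),
     is_homeo_action G M act ->
     symmetric_set G gens ->
     generates G gens ->
     subexp_growth G gens ->
     forall eps : R, 0 < eps ->
       exists h hi : pt M -> pt M, homeo_pair M h hi /\
         forall s, In s gens -> lipschitz M (exp eps) (fun x => h (act s (hi x))))
  /\
  (forall f : pt Circle -> pt Circle, is_homeo Circle f ->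
     forall eps : R, 0 < eps ->
       exists h hi : pt Circle -> pt Circle, homeo_pair Circle h hi /\
         is_homeo Circle (fun x => h (f (hi x))) /\
         lipschitz Circle (exp eps) (fun x => h (f (hi x))))
  /\
  (forall f : pt Circle -> pt Circle, is_homeo Circle f -> top_entropy_zero Circle f).
Proof.
  split; [exact part1|split; [exact part2|exact part3]].
Qed.
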